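(* Each of the following sets is definable in $\mathbf{Com}$: (a) the set of all Abelian periodic group varieties; (b) the set of all combinatorial commutative semigroup varieties; (c) the set of all commutative nil-varieties of semigroups.
   Context: $\mathbf{Com}$ denotes the lattice of all commutative semigroup varieties with join $\vee$ and meet $\wedge$; a subset of a lattice $L$ is definable in $L$ if it is the set of elements satisfying some first-order formula with one free variable in the language $\{\vee,\wedge\}$. A semigroup variety is combinatorial if all groups in it are trivial; it is a nil-variety if all its semigroups are nil-semigroups. An Abelian periodic group variety is a variety of Abelian groups of bounded exponent (including the trivial variety). *)

(* Defs.v *)
From mathcomp Require Import all_boot.
Set Implicit Arguments. Unset Strict Implicit. Unset Printing Implicit Defensive.

(* Words over the countable alphabet {x_0, x_1, ...}: nonempty sequences of
   letter indices; the product of the free semigroup is concatenation. *)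
Definition word := seq nat.

Definition subst (s : nat -> word) (w : word) : word := flatten (map s w).

Definition theory := word -> word -> Prop.

(* Equational theories of commutative semigroup varieties: fully invariant
   congruences of the free semigroup F_omega containing x0 x1 = x1 x0.
   By Birkhoff's theorem these are in order-reversing bijection with
   commutative semigroup varieties. *)
Record is_eqtheory (T : theory) : Prop := {
  eqt_nonempty : forall u v, T u v -> u <> [::] /\ v <> [::];
  eqt_refl : forall u, u <> [::] -> T u u;
  eqt_sym : forall u v, T u v -> T v u;
  eqt_trans : forall u v w, T u v -> T v w -> T u w;
  eqt_mulr : forall u v w, T u v -> w <> [::] -> T (u ++ w) (v ++ w);
  eqt_mull : forall u v w, T u v -> w <> [::] -> T (w ++ u) (w ++ v);
  eqt_subst : forall u v (s : nat -> word), T u v ->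
      (forall n, s n <> [::]) -> T (subst s u) (subst s v);
  eqt_comm : T [:: 0; 1] [:: 1; 0]
}.

(* V \/ W corresponds to Id(V) \cap Id(W). *)
Definition com_join (T1 T2 : theory) : theory := fun u v => T1 u v /\ T2 u v.
(* V /\ W corresponds to the equational theory generated by Id(V) \cup Id(W). *)
Definition com_meet (T1 T2 : theory) : theory := fun u v =>
  forall T, is_eqtheory T -> (forall a b, T1 a b -> T a b) ->
            (forall a b, T2 a b -> T a b) -> T u v.

Inductive lterm : Type :=
| LVar : nat -> lterm
| LJoin : lterm -> lterm -> lterm
| LMeet : lterm -> lterm -> lterm.

Inductive lformula : Type :=
| FEq : lterm -> lterm -> lformula
| FNot : lformula -> lformula
| FAnd : lformula -> lformula -> lformula
| FOr : lformula -> lformula -> lformula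
| FImp : lformula -> lformula -> lformula
| FForall : nat -> lformula -> lformula
| FExists : nat -> lformula -> lformula.

Definition env := nat -> theory.

Definition upd (e : env) (n : nat) (T : theory) : env :=
  fun m => if m == n then T else e m.

Fixpoint eval_term (e : env) (t : lterm) : theory :=
  match t with
  | LVar n => e n
  | LJoin t1 t2 => com_join (eval_term e t1) (eval_term e t2)
  | LMeet t1 t2 => com_meet (eval_term e t1) (eval_term e t2)
  end.

Definition same_theory (T1 T2 : theory) : Prop := forall u v, T1 u v <-> T2 u v.

Fixpoint holds (e : env) (f : lformula) : Prop :=
  match f with
  | FEq t1 t2 => same_theory (eval_term e t1) (eval_term e t2)
  | FNot f1 => ~ holds e f1
  | FAnd f1 f2 => holds e f1 /\ holds e f2
  | FOr f1 f2 => holds e f1 \/ holds e f2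
  | FImp f1 f2 => holds e f1 -> holds e f2
  | FForall n f1 => forall T, is_eqtheory T -> holds (upd e n T) f1
  | FExists n f1 => exists T, is_eqtheory T /\ holds (upd e n T) f1
  end.

Definition definable (P : theory -> Prop) : Prop :=
  exists (f : lformula) (x : nat), forall e : env,
    (forall n, is_eqtheory (e n)) -> (holds e f <-> P (e x)).

Record semigroup : Type := Semigroup {
  sg_car :> Type;
  sg_op : sg_car -> sg_car -> sg_car;
  sg_pt : sg_car;  (* semigroups are nonempty *)
  sg_assoc : forall x y z, sg_op x (sg_op y z) = sg_op (sg_op x y) z
}.

Fixpoint eval_from (S : semigroup) (a : nat -> S) (acc : S) (w : word) : S :=
  match w with
  | [::] => acc
  | n :: w' => eval_from a (sg_op acc (a n)) w'
  end.

Definition eval_word (S : semigroup) (a : nat -> S) (w : word) : S :=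
  match w with
  | [::] => sg_pt S
  | n :: w' => eval_from a (a n) w'
  end.

Definition in_variety (T : theory) (S : semigroup) : Prop :=
  forall u v, T u v -> forall a : nat -> S, eval_word a u = eval_word a v.

(* x^n for n >= 1 (spow x 0 = x as well, never used). *)
Fixpoint spow (S : semigroup) (x : S) (n : nat) : S :=
  match n with
  | 0 | 1 => x
  | k.+1 => sg_op (spow x k) x
  end.

Definition is_group (S : semigroup) : Prop :=
  exists e : S, (forall x, sg_op e x = x /\ sg_op x e = x) /\
    forall x, exists y, sg_op x y = e /\ sg_op y x = e.

Definition is_abelian_group_exp (S : semigroup) (n : nat) : Prop :=
  (forall x y : S, sg_op x y = sg_op y x) /\
  exists e : S, (forall x, sg_op e x = x /\ sg_op x e = x) /\
    (forall x, exists y, sg_op x y = e /\ sg_op y x = e) /\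
    (forall x, spow x n = e).

Definition is_trivial (S : semigroup) : Prop := forall x y : S, x = y.

Definition is_nil_semigroup (S : semigroup) : Prop :=
  exists z : S, (forall x, sg_op z x = z /\ sg_op x z = z) /\
    forall x, exists n, 0 < n /\ spow x n = z.

Definition abelian_periodic_group_variety (T : theory) : Prop :=
  exists n, 0 < n /\
    forall S : semigroup, in_variety T S <-> is_abelian_group_exp S n.

Definition combinatorial (T : theory) : Prop :=
  forall S : semigroup, in_variety T S -> is_group S -> is_trivial S.

Definition nil_variety (T : theory) : Prop :=
  forall S : semigroup, in_variety T S -> is_nil_semigroup S.

(* Main.v *)
Require Import Defs.
From mathcomp Require Import all_boot.
From mathcomp Require Import zify.
From Stdlib Require Import Classical ProofIrrelevance.
Set Implicit Arguments. Unset Strict Implicit. Unset Printing Implicit Defensive.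

Definition X k : word := nseq k 0.

Lemma subst_cat s u w : subst s (u ++ w) = subst s u ++ subst s w.
Proof. by rewrite /subst map_cat flatten_cat. Qed.
Lemma subst_cons s i u : subst s (i :: u) = s i ++ subst s u.
Proof. by []. Qed.
Lemma subst_nseq s k i : subst s (nseq k i) = flatten (nseq k (s i)).
Proof. by elim: k => //= k <-. Qed.
Lemma flatten_nseq_nseq k l (x:nat) : flatten (nseq k (nseq l x)) = nseq (k * l) x.
Proof. elim: k => //= k ->. by rewrite mulSn nseqD. Qed.
Lemma subst_ne s u : (forall n, s n <> [::]) -> u <> [::] -> subst s u <> [::].
Proof. case: u => // i u Hs _. rewrite subst_cons. case E: (s i) => //. by have := Hs i; rewrite E. Qed.
Lemma subst_const0 s v : (forall k, k \in v -> s k = [:: 0]) -> subst s v = X (size v).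
Proof. elim: v => //= k v IH Hs. rewrite subst_cons Hs ?mem_head // IH // => k' Hk'.
  by apply: Hs; rewrite in_cons Hk' orbT. Qed.

Definition TRIV : theory := fun u v => u <> [::] /\ v <> [::].


Lemma ctxr Y (H : is_eqtheory Y) u v w : Y u v -> Y (u ++ w) (v ++ w).
Proof. case: w => [|a w] Huv; first by rewrite !cats0. by apply: (eqt_mulr H). Qed.
Lemma ctxl Y (H : is_eqtheory Y) u v w : Y u v -> Y (w ++ u) (w ++ v).
Proof. case: w => [|a w] Huv; first by []. by apply: (eqt_mull H). Qed.
Lemma Ysym Y (H : is_eqtheory Y) u v : Y u v -> Y v u. Proof. exact: eqt_sym. Qed.
Lemma Ytr Y (H : is_eqtheory Y) u v w : Y u v -> Y v w -> Y u w. Proof. exact: eqt_trans. Qed.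
Lemma Yne Y (H : is_eqtheory Y) u v : Y u v -> u <> [::] /\ v <> [::]. Proof. exact: eqt_nonempty. Qed.
Lemma Ysub Y (H : is_eqtheory Y) s u v : Y u v -> (forall n, s n <> [::]) -> Y (subst s u) (subst s v).
Proof. exact: eqt_subst. Qed.

Lemma Yswap Y (H : is_eqtheory Y) a b : a <> [::] -> b <> [::] -> Y (a ++ b) (b ++ a).
Proof.
move=> Ha Hb. pose s := fun i : nat => if i == 0 then a else b.
have := Ysub H (eqt_comm H) (s := s). rewrite /subst /= !cats0. apply.
by move=> n; rewrite /s; case: (n == 0).
Qed.

Lemma Yperm Y (H : is_eqtheory Y) u v : u <> [::] -> perm_eq u v -> Y u v.
Proof.
elim: u v => // i u IH v _ Hp.
have iv : i \in v by rewrite -(perm_mem Hp) mem_head.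
case/splitPr: iv Hp => v1 v2 Hp.
have Hp' : perm_eq u (v1 ++ v2).
  by rewrite -(perm_cons i); apply: (perm_trans Hp); rewrite -cat1s perm_catCA.
have step2 : Y (i :: v1 ++ v2) (v1 ++ i :: v2).
  case: v1 {Hp Hp'} => [|a v1].
    by apply: (eqt_refl H).
  rewrite -cat1s -(cat1s i v2) !catA. apply: (ctxr H). by apply: Yswap.
case: u IH Hp Hp' => [|b u] IH Hp Hp'.
  have : size (v1 ++ v2) = 0 by rewrite -(perm_size Hp').
  by case: v1 {step2 Hp Hp'} => // ; case: v2 => //= _; apply: (eqt_refl H).
apply: (Ytr H _ step2). rewrite -cat1s -(cat1s i (v1 ++ v2)). apply: (ctxl H).
by apply: IH.
Qed.

Lemma perm_subst s u v : perm_eq u v -> perm_eq (subst s u) (subst s v).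
Proof. by move=> Hp; apply: perm_flatten; apply: perm_map. Qed.

Lemma size_subst_ge s u : (forall n, s n <> [::]) -> size u <= size (subst s u).
Proof. move=> Hs; elim: u => //= i u IH. rewrite subst_cons size_cat.
  have : 0 < size (s i) by case E: (s i) => //; have := Hs i; rewrite E. lia. Qed.

Lemma subst_single s u : (forall n, size (s n) = 1) -> size (subst s u) = size u.
Proof. move=> Hs; elim: u => //= i u IH. by rewrite subst_cons size_cat Hs IH. Qed.

Definition IdA (n : nat) : theory := fun u v =>
  u <> [::] /\ v <> [::] /\ forall f : nat -> nat, sumn (map f u) = sumn (map f v) %[mod n].
Definition IdSL : theory := fun u v =>
  u <> [::] /\ v <> [::] /\ forall P : pred nat, has P u = has P v.
Definition IdZM : theory := fun u v =>
  u <> [::] /\ v <> [::] /\ (u = v \/ (1 < size u /\ 1 < size v)).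
Definition Zth (z : word -> bool) : theory := fun u v =>
  u <> [::] /\ v <> [::] /\ (perm_eq u v \/ (z u /\ z v)).

Lemma sumn_subst f s u : sumn (map f (subst s u)) = sumn (map (fun i => sumn (map f (s i))) u).
Proof. elim: u => //= i u IH. by rewrite subst_cons map_cat sumn_cat IH. Qed.
Lemma has_subst P s u : has P (subst s u) = has (fun i => has P (s i)) u.
Proof. elim: u => //= i u IH. by rewrite subst_cons has_cat IH. Qed.

Lemma modD3 n a b c d : a = b %[mod n] -> c = d %[mod n] -> a + c = b + d %[mod n].
Proof. by move=> H1 H2; rewrite -modnDm H1 H2 modnDm. Qed.

Lemma cat_ne (u w : word) : u <> [::] -> u ++ w <> [::].
Proof. by case: u. Qed.
Lemma cat_ne' (u w : word) : w <> [::] -> u ++ w <> [::].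
Proof. by case: u => //= ; case: w. Qed.

Lemma IdA_eq n : is_eqtheory (IdA n).
Proof.
split.
- by move=> u v [Hu [Hv _]].
- by move=> u Hu; split => //; split => // f.
- by move=> u v [Hu [Hv Hf]]; split => //; split => // f; rewrite Hf.
- by move=> u v w [Hu [Hv H1]] [_ [Hw H2]]; split => //; split => // f; rewrite H1 H2.
- move=> u v w [Hu [Hv H1]] Hw; split; [exact: cat_ne|split; [exact: cat_ne|]].
  by move=> f; rewrite !map_cat !sumn_cat; apply: modD3.
- move=> u v w [Hu [Hv H1]] Hw; split; [exact: cat_ne'|split; [exact: cat_ne'|]].
  by move=> f; rewrite !map_cat !sumn_cat; apply: modD3.
- move=> u v s [Hu [Hv H1]] Hs; split; [exact: subst_ne|split; [exact: subst_ne|]].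
  by move=> f; rewrite !sumn_subst.
- by split => //; split => // f /=; rewrite !addn0 addnC.
Qed.

Lemma IdSL_eq : is_eqtheory IdSL.
Proof.
split.
- by move=> u v [Hu [Hv _]].
- by move=> u Hu; split => //; split => // f.
- by move=> u v [Hu [Hv Hf]]; split => //; split => // f; rewrite Hf.
- by move=> u v w [Hu [Hv H1]] [_ [Hw H2]]; split => //; split => // f; rewrite H1 H2.
- move=> u v w [Hu [Hv H1]] Hw; split; [exact: cat_ne|split; [exact: cat_ne|]].
  by move=> f; rewrite !has_cat H1.
- move=> u v w [Hu [Hv H1]] Hw; split; [exact: cat_ne'|split; [exact: cat_ne'|]].
  by move=> f; rewrite !has_cat H1.
- move=> u v s [Hu [Hv H1]] Hs; split; [exact: subst_ne|split; [exact: subst_ne|]].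
  by move=> f; rewrite !has_subst.
- by split => //; split => // f /=; rewrite !orbF orbC.
Qed.

Lemma IdZM_eq : is_eqtheory IdZM.
Proof.
split.
- by move=> u v [Hu [Hv _]].
- by move=> u Hu; split => //; split => //; left.
- move=> u v [Hu [Hv [->|[H1 H2]]]]; split => //; split => //; [left|right] => //.
- move=> u v w [Hu [Hv H1]] [_ [Hw H2]]; split => //; split => //.
  case: H1 => [E|[a b]]; first by subst.
  case: H2 => [E|[c d]]; first by subst; right.
  by right.
- move=> u v w [Hu [Hv H1]] Hw; split; [exact: cat_ne|split; [exact: cat_ne|]].
  case: H1 => [->|[a b]]; [by left|right; rewrite !size_cat; lia].
- move=> u v w [Hu [Hv H1]] Hw; split; [exact: cat_ne'|split; [exact: cat_ne'|]].
  case: H1 => [->|[a b]]; [by left|right; rewrite !size_cat; lia].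
- move=> u v s [Hu [Hv H1]] Hs; split; [exact: subst_ne|split; [exact: subst_ne|]].
  case: H1 => [->|[a b]]; [by left|right].
  have := size_subst_ge u Hs; have := size_subst_ge v Hs. lia.
- by split => //; split => //; right.
Qed.

Record zpred (z : word -> bool) : Prop := {
  zp_perm : forall u v, perm_eq u v -> z u -> z v;
  zp_catr : forall u w, z u -> z (u ++ w);
  zp_catl : forall u w, z u -> z (w ++ u);
  zp_subst : forall u s, (forall n, s n <> [::]) -> z u -> z (subst s u)
}.

Lemma Zth_eq z : zpred z -> is_eqtheory (Zth z).
Proof.
move=> Z; split.
- by move=> u v [Hu [Hv _]].
- by move=> u Hu; split => //; split => //; left.
- move=> u v [Hu [Hv [H|[H1 H2]]]]; split => //; split => //; [left|right] => //.
  by rewrite perm_sym.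
- move=> u v w [Hu [Hv H1]] [_ [Hw H2]]; split => //; split => //.
  case: H1 => [E|[a b]]; case: H2 => [E'|[c d]].
  + by left; apply: perm_trans E E'.
  + by right; split => //; apply: (zp_perm Z _ c); rewrite perm_sym.
  + by right; split => //; apply: (zp_perm Z E').
  + by right.
- move=> u v w [Hu [Hv H1]] Hw; split; [exact: cat_ne|split; [exact: cat_ne|]].
  case: H1 => [E|[a b]]; [left; by rewrite perm_cat2r|right; split; exact: (zp_catr Z)].
- move=> u v w [Hu [Hv H1]] Hw; split; [exact: cat_ne'|split; [exact: cat_ne'|]].
  case: H1 => [E|[a b]]; [left; by rewrite perm_cat2l|right; split; exact: (zp_catl Z)].
- move=> u v s [Hu [Hv H1]] Hs; split; [exact: subst_ne|split; [exact: subst_ne|]].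
  case: H1 => [E|[a b]]; [left; exact: perm_subst|right; split; exact: (zp_subst Z)].
- split => //; split => //; left. by rewrite (perm_catC [:: 0] [:: 1]).
Qed.

Definition zero2 (w : word) : bool := 2 < size w.
Definition zero1 (w : word) : bool := (3 < size w) || ~~ uniq w.

Lemma zero2_p : zpred zero2.
Proof.
rewrite /zero2; split.
- by move=> u v /perm_size ->.
- by move=> u w; rewrite size_cat; lia.
- by move=> u w; rewrite size_cat; lia.
- move=> u s Hs; have := size_subst_ge u Hs; lia.
Qed.

Lemma nuniq_perm (u : word) : ~~ uniq u -> exists i r, perm_eq u (i :: i :: r).
Proof.
elim: u => // a u IH /=; rewrite negb_and negbK; case/orP => [au|nu].
  exists a, (rem a u). by rewrite perm_cons; apply: perm_to_rem.
have [i [r Hp]] := IH nu. exists i, (a :: r).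
have h1 : perm_eq (a::u) ([:: a] ++ [:: i; i] ++ r) by rewrite /= perm_cons.
apply: (perm_trans h1). by rewrite perm_catCA.
Qed.

Lemma nuniq_cat_r (u w : word) : ~~ uniq u -> ~~ uniq (u ++ w).
Proof. by apply: contra; rewrite cat_uniq => /and3P []. Qed.
Lemma nuniq_cat_l (u w : word) : ~~ uniq u -> ~~ uniq (w ++ u).
Proof. by apply: contra; rewrite cat_uniq => /and3P []. Qed.

Lemma zero1_p : zpred zero1.
Proof.
rewrite /zero1; split.
- by move=> u v Hp; rewrite (perm_size Hp) (perm_uniq Hp).
- move=> u w /orP [H|H]; apply/orP; [left; rewrite size_cat; lia|right; exact: nuniq_cat_r].
- move=> u w /orP [H|H]; apply/orP; [left; rewrite size_cat; lia|right; exact: nuniq_cat_l].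
- move=> u s Hs /orP [H|H]; apply/orP.
    left; have := size_subst_ge u Hs; lia.
  right. have [i [r Hp]] := nuniq_perm H.
  rewrite (perm_uniq (perm_subst s Hp)) !subst_cons.
  case E: (s i) => [|k t]; first by have := Hs i; rewrite E.
  rewrite /= mem_cat; apply/negP => /andP [/negP []].
  by rewrite in_cons eqxx orbT.
Qed.

Definition Z1 := Zth zero1.
Definition Z2 := Zth zero2.
Lemma Z1_eq : is_eqtheory Z1. Proof. exact: Zth_eq zero1_p. Qed.
Lemma Z2_eq : is_eqtheory Z2. Proof. exact: Zth_eq zero2_p. Qed.

Lemma TRIV_eq : is_eqtheory TRIV.
Proof.
split; rewrite /TRIV.
- by move=> u v [] ? ?; split.
- by move=> u ?; split.
- by move=> u v [] ? ?; split.
- by move=> u v w [] ? ? [] ? ?; split.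
- by move=> u v w [] ? ? ?; split; apply: cat_ne.
- by move=> u v w [] ? ? ?; split; apply: cat_ne'.
- by move=> u v s [] ? ? ?; split; apply: subst_ne.
- by [].
Qed.

Lemma sub_TRIV Y (H : is_eqtheory Y) u v : Y u v -> TRIV u v.
Proof. exact: eqt_nonempty. Qed.

Definition incl (T1 T2 : theory) := forall u v, T1 u v -> T2 u v.

Lemma XD a b : X (a + b) = X a ++ X b. Proof. exact: nseqD. Qed.
Lemma X_ne k : 0 < k -> X k <> [::]. Proof. by case: k. Qed.
Lemma nseq_ne k (i : nat) : 0 < k -> nseq k i <> [::]. Proof. by case: k. Qed.

Lemma Xpow1 Y (H : is_eqtheory Y) n : Y (X 1) (X n.+1) -> forall j, 0 < j -> Y (X j) (X (j + n)).
Proof.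
move=> H1 j Hj. have -> : j = j.-1 + 1 by lia. rewrite -addnA add1n !XD.
exact: (ctxl H).
Qed.

Lemma Xpow Y (H : is_eqtheory Y) n : Y (X 1) (X n.+1) -> forall j t, 0 < j -> Y (X j) (X (j + t * n)).
Proof.
move=> H1 j t Hj. elim: t => [|t IH]; first by rewrite addn0; apply: (eqt_refl H); apply: X_ne.
apply: (Ytr H IH). have -> : j + t.+1 * n = (j + t * n) + n by rewrite mulSn; lia.
apply: (Xpow1 H H1). lia.
Qed.

Lemma subst_X_letter i k : subst (fun _ => [:: i]) (X k) = nseq k i.
Proof. rewrite subst_nseq; by elim: k => //= k ->. Qed.

Lemma Lpow Y (H : is_eqtheory Y) n i : Y (X 1) (X n.+1) -> forall j t, 0 < j ->
  Y (nseq j i) (nseq (j + t * n) i).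
Proof.
move=> H1 j t Hj. rewrite -!subst_X_letter. apply: (Ysub H); last by [].
exact: (Xpow H).
Qed.

Lemma Ytriv Y (H : is_eqtheory Y) a b : a <> b -> Y [:: a] [:: b] -> incl TRIV Y.
Proof.
move=> ab Hab u v [Hu Hv]. pose s := fun k => if k == a then u else v.
have := Ysub H Hab (s := s). rewrite /subst /= !cats0 /s eqxx.
have -> : (b == a) = false by apply/eqP => E; apply: ab.
apply. by move=> k; case: (k == a).
Qed.

Lemma Zlem Y (H : is_eqtheory Y) : ~ incl Y IdZM -> exists d, 0 < d /\ Y (X 1) (X d.+1).
Proof.
move=> nI.
have aux : forall u v, Y u v -> u <> v -> size u = 1 -> exists d, 0 < d /\ Y (X 1) (X d.+1).
  move=> u v Huv nuv su.
  case: u Huv nuv su => [|i [|? ?]] //= Huv nuv _.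
  have [_ Hv] := Yne H Huv.
  have H0' : Y (X 1) (X (size v)).
    have := Ysub H Huv (s := fun _ => [:: 0]).
    by rewrite (subst_const0 (v := [:: i]) (s := fun _ => [:: 0])) // (subst_const0 (v := v) (s := fun _ => [:: 0])) //; apply.
  case Es: (size v) => [|[|k]].
  - by case: v Huv nuv Hv Es H0'.
  - case: v Huv nuv Hv Es H0' => [|j [|? ?]] //= Huv nuv _ _ _.
    have ij : i <> j by move=> E; apply: nuv; rewrite E.
    exists 1; split => //. apply: (Ytriv H ij Huv). by split.
  - exists k.+1; split => //. by rewrite Es in H0'.
apply: NNPP => nE. apply: nI => u v Huv.
have [Hu Hv] := Yne H Huv.
split => //; split => //.
apply: NNPP => nZ.
have nuv : u <> v by move=> E; apply: nZ; left.
have : size u <= 1 \/ size v <= 1.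
  case: (leqP (size u) 1) => a; [by left|]. case: (leqP (size v) 1) => b; [by right|].
  by case: nZ; right.
case=> s1.
- apply: nE; apply: (aux u v) => //. by case: u Hu s1 {Huv nuv nZ} => [|? [|? ?]].
- apply: nE; apply: (aux v u) => //. exact: (Ysym H). by move=> E; apply: nuv.
  by case: v Hv s1 {Huv nuv nZ} => [|? [|? ?]].
Qed.

Lemma exmin (Q : nat -> Prop) : (exists d, 0 < d /\ Q d) ->
  exists n, 0 < n /\ Q n /\ forall d, 0 < d < n -> ~ Q d.
Proof.
case=> d [Hd Qd].
have : forall N, forall d, d <= N -> 0 < d -> Q d ->
  exists n, 0 < n /\ Q n /\ forall d, 0 < d < n -> ~ Q d.
  elim=> [|N IH] d0 Hd0 Hp Qd0; first by lia.
  case: (classic (exists d', 0 < d' < d0 /\ Q d')) => [[d' [Hd' Qd']]|nex].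
    apply: (IH d') => //; lia.
  exists d0; split => //; split => // d' Hd' Qd'. apply: nex. by exists d'.
by move=> /(_ d d); apply.
Qed.

Definition minimal Y n := forall d, 0 < d < n -> ~ Y (X 1) (X d.+1).

Lemma PwMod Y (H : is_eqtheory Y) n : 0 < n -> Y (X 1) (X n.+1) -> minimal Y n ->
  forall a b, 0 < a -> 0 < b -> Y (X a) (X b) -> a = b %[mod n].
Proof.
move=> Hn H1 Hmin.
have main : forall a b, 0 < a -> a <= b -> Y (X a) (X b) -> a = b %[mod n].
  move=> a b Ha Hab Y1.
  set c := b - a. set r := c %% n.
  have Hc : c = c %/ n * n + r by rewrite /r -divn_eq.
  case: (posnP r) => Hr.
    have -> : b = a + c by rewrite /c; lia.
    by rewrite -modnDmr -/r Hr addn0.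
  exfalso. apply: (Hmin r); first by (rewrite /r ltn_pmod //; lia).
  have an : a <= a * n by rewrite leq_pmulr.
  set e := 1 + a * n - a.
  have Y2 : Y (X (e + a)) (X (e + b)) by rewrite !XD; apply: (ctxl H).
  have E1 : e + a = 1 + a * n by rewrite /e; lia.
  have E2 : e + b = r.+1 + (a + c %/ n) * n by rewrite /e mulnDl; lia.
  rewrite E1 E2 in Y2.
  apply: (Ytr H (Xpow H H1 (j:=1) a (ltn0Sn 0))).
  apply: (Ytr H Y2). apply: (Ysym H). exact: (Xpow H H1).
move=> a b Ha Hb Yab. case: (leqP a b) => ab; first exact: main.
apply/esym; apply: main => //; [lia|exact: (Ysym H)].
Qed.

Lemma subst_Xf g u : subst (fun i => X (g i)) u = X (sumn (map g u)).
Proof. elim: u => //= i u IH. by rewrite subst_cons IH XD. Qed.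

Lemma sumn_addn (f : nat -> nat) n (u : word) : sumn (map (fun i => f i + n) u) = sumn (map f u) + size u * n.
Proof. elim: u => //= i u ->. rewrite mulSn. lia. Qed.

Lemma Mlem Y (H : is_eqtheory Y) n : 0 < n -> Y (X 1) (X n.+1) -> minimal Y n -> incl Y (IdA n).
Proof.
move=> Hn H1 Hmin u v Huv. have [Hu Hv] := Yne H Huv.
split => //; split => // f.
have := Ysub H Huv (s := fun i => X (f i + n)).
rewrite !subst_Xf => /(_ _) Y2.
have {}Y2 := Y2 (fun k => X_ne (k:=f k + n) ltac:(lia)).
have pos : forall w : word, w <> [::] -> 0 < sumn (map (fun i => f i + n) w).
  by case=> //= i w _; lia.
have := PwMod H Hn H1 Hmin (pos u Hu) (pos v Hv) Y2.
by rewrite !sumn_addn -!(modnDmr _ (_ * n)) !modnMl !addn0.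
Qed.

Lemma perm01 (w : word) : all (fun k => k < 2) w ->
  perm_eq w (nseq (count_mem 0 w) 0 ++ nseq (count_mem 1 w) 1).
Proof.
elim: w => //= k w IH /andP [Hk Hw]. have {}IH := IH Hw.
case: k Hk => [|[|//]] _ /=.
  by rewrite add0n perm_cons.
idtac.
apply: perm_trans (_ : perm_eq _ ([:: 1] ++ nseq (count_mem 0 w) 0 ++ nseq (count_mem 1 w) 1)) _.
  by rewrite /= perm_cons.
by rewrite perm_catCA.
Qed.

Lemma SLpair Y (H : is_eqtheory Y) : ~ incl Y IdSL ->
  exists a b c, 0 < b /\ 0 < c /\ Y (nseq a 0 ++ nseq b 1) (X c).
Proof.
move=> nI.
have aux : forall u v j, Y u v -> j \in u -> j \notin v ->
    exists a b c, 0 < b /\ 0 < c /\ Y (nseq a 0 ++ nseq b 1) (X c).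
  move=> u v j Huv ju jv. have [Hu Hv] := Yne H Huv.
  pose s := fun k => if k == j then [:: 1] else [:: 0].
  have Hs : forall n, s n <> [::] by move=> k; rewrite /s; case: (k == j).
  have Y1 := Ysub H Huv Hs.
  rewrite (subst_const0 (v := v)) in Y1; last first.
    move=> k kv. rewrite /s. case: eqP => // E. by move: jv; rewrite -E kv.
  set w := subst s u in Y1.
  have Aw : all (fun k => k < 2) w.
    rewrite /w; elim: (u) => //= k u' IH. rewrite subst_cons all_cat IH andbT /s.
    by case: (k == j).
  have w1 : 0 < count_mem 1 w.
    rewrite -has_count /w has_subst. apply/hasP; exists j => //. by rewrite /s eqxx.
  exists (count_mem 0 w), (count_mem 1 w), (size v); split => //; split.
    by case: (v) Hv.
  apply: (Ytr H _ Y1). apply: (Ysym H). apply: (Yperm H); last exact: perm01.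
  by rewrite /w; apply: subst_ne.
apply: NNPP => nE. apply: nI => u v Huv.
have [Hu Hv] := Yne H Huv.
split => //; split => // P.
apply/eqP/negPn/negP => nP.
case Eu: (has P u); rewrite Eu in nP.
- have Ev : has P v = false by case: (has P v) nP.
  case/hasP: Eu => j ju Pj. apply: nE; apply: (aux u v j) => //.
  apply/negP => jv. by move/negP: Ev; apply; apply/hasP; exists j.
- have Ev : has P v = true by case: (has P v) nP.
  case/hasP: Ev => j jv Pj. apply: nE; apply: (aux v u j) => //; first exact: (Ysym H).
  apply/negP => ju. by move/negP: Eu; apply; apply/hasP; exists j.
Qed.

Lemma SLbreak Y (H : is_eqtheory Y) d : 0 < d -> Y (X 1) (X d.+1) -> ~ incl Y IdSL ->
  exists m, 0 < m /\ Y (0 :: nseq m 1) [:: 0].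
Proof.
move=> Hd H1 nI. have [a [b [c [Hb [Hc Y1]]]]] := SLpair H nI.
have cd : c <= c * d by rewrite leq_pmulr.
set e := 1 + c * d - c.
have Y2 : Y (X (e + a) ++ nseq b 1) (X (e + c)).
  by rewrite !XD -catA; apply: (ctxl H).
have E : e + c = 1 + c * d by rewrite /e; lia.
rewrite E in Y2.
have Y3 : Y (X (e + a) ++ nseq b 1) (X 1).
  apply: (Ytr H Y2). apply: (Ysym H). exact: (Xpow H H1).
pose s := fun k => if k == 0 then X d else [:: 1].
have Hs : forall n, s n <> [::] by move=> k; rewrite /s; case: (k == 0) => //; apply: X_ne.
have Y4 := Ysub H Y3 Hs.
rewrite subst_cat /X !subst_nseq flatten_nseq_nseq /= cats0 in Y4.
have E4 : flatten (nseq b [:: 1]) = nseq b 1 by elim: (b) => //= b' ->.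
rewrite E4 in Y4.
have A1 : 0 < e + a by rewrite /e; lia.
have Y5 : Y (X d ++ nseq b 1) (X d).
  apply: (Ytr H _ Y4). apply: (ctxr H).
  have -> : (e + a) * d = d + (e + a).-1 * d by rewrite -mulSn; congr (_ * _); lia.
  exact: (Xpow H H1).
have Y6 : Y (X 1 ++ X d ++ nseq b 1) (X 1 ++ X d) by apply: (ctxl H).
rewrite catA -!XD add1n in Y6.
exists b; split => //.
have -> : 0 :: nseq b 1 = X 1 ++ nseq b 1 by [].
apply: (Ytr H (ctxr H (nseq b 1) H1)). apply: (Ytr H Y6). by apply: (Ysym H).
Qed.

Lemma GenA Y (H : is_eqtheory Y) n m : Y (X 1) (X n.+1) -> 0 < m -> Y (0 :: nseq m 1) [:: 0] ->
  Y (0 :: nseq n 1) [:: 0].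
Proof.
move=> H1 Hm Hmm.
have Y1 : Y ([:: 0] ++ nseq n 1) ((0 :: nseq m 1) ++ nseq n 1) by apply: (ctxr H); apply: (Ysym H).
rewrite /= -nseqD in Y1.
apply: (Ytr H Y1). apply: (Ytr H _ Hmm). apply: (Ysym H).
have := Lpow H 1 H1 (j:=m) 1 Hm. rewrite mul1n => Y2.
by have := ctxl H [:: 0] Y2.
Qed.

Lemma absorb1 Y (H : is_eqtheory Y) n k u : Y (0 :: nseq n 1) [:: 0] -> u <> [::] -> Y u (u ++ nseq n k).
Proof.
move=> Hn Hu. pose s := fun i => if i == 0 then u else [:: k].
have Hs : forall i, s i <> [::] by move=> i; rewrite /s; case: (i == 0).
have := Ysub H Hn Hs. rewrite !subst_cons /= subst_nseq cats0.
have -> : flatten (nseq n (s 1)) = nseq n k by rewrite /s /=; elim: (n) => //= n' ->.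
by move/(Ysym H).
Qed.

Lemma absorbt Y (H : is_eqtheory Y) n k u t : Y (0 :: nseq n 1) [:: 0] -> u <> [::] ->
  Y u (u ++ nseq (t * n) k).
Proof.
move=> Hn Hu. elim: t => [|t IH]; first by rewrite mul0n cats0; apply: (eqt_refl H).
rewrite mulSnr nseqD catA. apply: (Ytr H IH). apply: (absorb1 H _ Hn). exact: cat_ne.
Qed.

Lemma absorbL Y (H : is_eqtheory Y) n (c : nat -> nat) L u : Y (0 :: nseq n 1) [:: 0] ->
  (forall k, n %| c k) -> u <> [::] -> Y u (u ++ flatten [seq nseq (c k) k | k <- L]).
Proof.
move=> Hn Hc. elim: L u => [|a L IH] u Hu; first by rewrite cats0; apply: (eqt_refl H).
rewrite /= catA. have Y1 : Y u (u ++ nseq (c a) a).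
  by rewrite -(divnK (Hc a)); apply: (absorbt H).
apply: (Ytr H Y1). apply: IH. exact: cat_ne.
Qed.

Lemma count_flat (c : nat -> nat) k m N :
  count_mem k (flatten [seq nseq (c j) j | j <- iota m N]) = if (m <= k < m + N) then c k else 0.
Proof.
elim: N m => [|N IH] m /=; first by case: ifP => //; lia.
rewrite count_cat count_nseq IH /=.
case: (eqVneq k m) => [->|km].
  rewrite mul1n ltnn /= leqnn /=. have -> : m < m + N.+1 by lia. by rewrite addn0.
rewrite mul0n add0n. case: ifP; case: ifP => // h1 h2; exfalso; move: h1 h2 km; lia.
Qed.

Lemma letter_bound (w : word) k : k \in w -> k <= sumn w.
Proof. elim: w => //= a w IH. rewrite in_cons => /orP [/eqP ->|/IH]; lia. Qed.

Lemma sumn_ind (u : word) k : sumn [seq (i == k : nat) | i <- u] = count_mem k u.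
Proof. elim: u => //= a u ->. by rewrite eq_sym. Qed.

Lemma GenCore Y (H : is_eqtheory Y) n : Y (0 :: nseq n 1) [:: 0] -> incl (IdA n) Y.
Proof.
move=> Hn u v [Hu [Hv Hf]].
have Hc : forall k, count_mem k u = count_mem k v %[mod n].
  by move=> k; rewrite -!sumn_ind; apply: Hf.
pose cu k := count_mem k v - count_mem k u.
pose cv k := count_mem k u - count_mem k v.
have dvu : forall k, n %| cu k.
  move=> k. rewrite /cu. case: (leqP (count_mem k u) (count_mem k v)) => h.
    by rewrite -eqn_mod_dvd // Hc.
  by have -> : count_mem k v - count_mem k u = 0 by lia.
have dvv : forall k, n %| cv k.
  move=> k. rewrite /cv. case: (leqP (count_mem k v) (count_mem k u)) => h.
    by rewrite -eqn_mod_dvd // Hc.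
  by have -> : count_mem k u - count_mem k v = 0 by lia.
set N := sumn u + sumn v + 1.
have Y1 := absorbL H (iota 0 N) Hn dvu Hu.
have Y2 := absorbL H (iota 0 N) Hn dvv Hv.
apply: (Ytr H Y1). apply: (Ytr H _ (Ysym H Y2)). apply: (Yperm H); first exact: cat_ne.
rewrite /perm_eq; apply/allP => k _; apply/eqP.
rewrite !count_cat !count_flat /cu /cv add0n.
case: ifP => hk; first lia.
have ku : count_mem k u = 0.
  apply/count_memPn/negP => /letter_bound. move/negbT: hk. rewrite /N. lia.
have kv : count_mem k v = 0.
  apply/count_memPn/negP => /letter_bound. move/negbT: hk. rewrite /N. lia.
by rewrite ku kv.
Qed.

Lemma idem_add Y (H : is_eqtheory Y) k u : Y (X 1) (X 2) -> k \in u -> Y u (u ++ [:: k]).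
Proof.
move=> H1 ku. have Hp := perm_to_rem ku.
have Y1 : Y u (k :: rem k u) by apply: (Yperm H) => //; case: (u) ku.
apply: (Ytr H Y1).
have Y2 : Y [:: k] [:: k; k].
  have := Ysub H H1 (s := fun _ => [:: k]). by apply.
have Y3 : Y (k :: rem k u) (k :: k :: rem k u) by have := ctxr H (rem k u) Y2.
apply: (Ytr H Y3). apply: (Yperm H) => //.
apply: perm_trans (_ : perm_eq _ ([:: k] ++ u)) _; last by rewrite perm_catC.
by rewrite /= perm_cons perm_sym.
Qed.

Lemma GenSL Y (H : is_eqtheory Y) : Y (X 1) (X 2) -> incl IdSL Y.
Proof.
move=> H1.
have absorb : forall w u, u <> [::] -> (forall k, k \in w -> k \in u) -> Y u (u ++ w).
  elim=> [|k w IH] u Hu Hw; first by rewrite cats0; apply: (eqt_refl H).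
  have Y1 := idem_add H H1 (Hw k (mem_head _ _)).
  apply: (Ytr H Y1). rewrite -(cat1s k w) catA. apply: IH; first exact: cat_ne.
  move=> k' k'w. rewrite mem_cat. apply/orP; left. apply: Hw. by rewrite in_cons k'w orbT.
move=> u v [Hu [Hv HP]].
have vu : forall k, k \in v -> k \in u.
  move=> k kv. have := HP (pred1 k). have -> : has (pred1 k) v by apply/hasP; exists k => //=.
  by move/hasP => [k' k'u /eqP <-].
have uv : forall k, k \in u -> k \in v.
  move=> k ku. have := HP (pred1 k). have -> : has (pred1 k) u by apply/hasP; exists k => //=.
  by move/esym/hasP => [k' k'u /eqP <-].
apply: (Ytr H (absorb v u Hu vu)). apply: (Ytr H _ (Ysym H (absorb u v Hv uv))).
apply: (Yperm H); [exact: cat_ne|by rewrite perm_catC].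
Qed.

Lemma Klem Y (H : is_eqtheory Y) : ~ incl Y IdZM -> ~ incl Y IdSL ->
  exists n, 0 < n /\ same_theory Y (IdA n).
Proof.
move=> nZ nS. have [d [Hd Hd1]] := Zlem H nZ.
have [n [Hn [H1 Hmin]]] := exmin (ex_intro (fun d => 0 < d /\ Y (X 1) (X d.+1)) d (conj Hd Hd1)).
have [m [Hm Hmm]] := SLbreak H Hn H1 nS.
have Hg := GenA H H1 Hm Hmm.
exists n; split => // u v; split; [exact: (Mlem H Hn H1 Hmin)|exact: (GenCore H Hg)].
Qed.

Definition le (A B : theory) := incl B A.
Definition isZero (T : theory) := incl TRIV T.
Definition isAtom (A : theory) := ~ isZero A /\
  forall Y, is_eqtheory Y -> le Y A -> isZero Y \/ same_theory Y A.
Definition onlyAtom (Y A : theory) := forall B, is_eqtheory B -> isAtom B -> le B Y -> same_theory B A.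
Definition isSL (A : theory) := isAtom A /\ forall Y, is_eqtheory Y -> onlyAtom Y A -> le Y A.
Definition isZMp (A : theory) := isAtom A /\ exists Y Z, is_eqtheory Y /\ is_eqtheory Z /\
  onlyAtom Y A /\ onlyAtom Z A /\ ~ le Y Z /\ ~ le Z Y.

Lemma same_sym A B : same_theory A B -> same_theory B A.
Proof. by move=> H u v; split => /H. Qed.
Lemma same_tr A B C : same_theory A B -> same_theory B C -> same_theory A C.
Proof. by move=> H1 H2 u v; rewrite H1 H2. Qed.
Lemma same_incl A B : same_theory A B -> incl A B.
Proof. by move=> H u v /H. Qed.
Lemma incl_tr A B C : incl A B -> incl B C -> incl A C.
Proof. by move=> H1 H2 u v /H1 /H2. Qed.
Lemma incl_same A B : incl A B -> incl B A -> same_theory A B.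
Proof. by move=> H1 H2 u v; split => [/H1|/H2]. Qed.

Lemma isZero_same A B : same_theory A B -> isZero A -> isZero B.
Proof. by move=> H Z; apply: incl_tr Z (same_incl H). Qed.
Lemma isAtom_same A B : same_theory A B -> isAtom A -> isAtom B.
Proof.
move=> H [nZ HA]; split.
  by move=> Z; apply: nZ; apply: isZero_same Z; apply: same_sym.
move=> Y HY le1. case: (HA Y HY (incl_tr (same_incl H) le1)) => [|HS]; [by left|right].
exact: same_tr HS H.
Qed.
Lemma onlyAtom_same Y A B : same_theory A B -> onlyAtom Y A -> onlyAtom Y B.
Proof. by move=> H O C1 HC HA le1; apply: same_tr (O C1 HC HA le1) H. Qed.

Lemma sumn_nseq (f : nat -> nat) k i : sumn (map f (nseq k i)) = k * f i.
Proof. elim: k => //= k ->; by rewrite mulSn. Qed.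
Lemma sumn_one (u : word) : sumn (map (fun _ => 1) u) = size u.
Proof. by elim: u => //= a u ->. Qed.

Lemma IdA_size n u v : IdA n u v -> size u = size v %[mod n].
Proof. by move=> [_ [_ /(_ (fun _ => 1))]]; rewrite !sumn_one. Qed.

Lemma mod_nontriv q a k : 0 < k < q -> a = a + k %[mod q] -> False.
Proof.
move=> Hk /esym/eqP. rewrite eqn_mod_dvd; last by lia.
have -> : a + k - a = k by lia.
move/(dvdn_leq _). lia.
Qed.

Lemma IdA_X1 n : IdA n (X 1) (X n.+1).
Proof.
split => //; split => // f. rewrite !sumn_nseq mul1n mulSn.
by rewrite -modnDmr mulnC modnMl addn0.
Qed.
Lemma IdA_xyn n : IdA n (0 :: nseq n 1) [:: 0].
Proof.
split => //; split => // f /=. rewrite sumn_nseq addn0.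
by rewrite -modnDmr mulnC modnMl addn0.
Qed.
Lemma IdA_incl m n : m %| n -> incl (IdA n) (IdA m).
Proof.
move=> Hmn u v [Hu [Hv Hf]]; split => //; split => // f.
by rewrite -(modn_dvdm _ Hmn) Hf (modn_dvdm _ Hmn). 
Qed.


Lemma cons_ne (i : nat) (w : word) : i :: w <> [::]. Proof. by []. Qed.

Lemma notzero_SL : ~ isZero IdSL.
Proof. move=> Z. have [_ [_ H]] := Z [:: 0] [:: 1] (conj (@cons_ne 0 [::]) (@cons_ne 1 [::])).
  by have := H (pred1 1). Qed.
Lemma notzero_ZM : ~ isZero IdZM.
Proof. move=> Z. by have [_ [_ [|[]]]] := Z [:: 0] [:: 1] (conj (@cons_ne 0 [::]) (@cons_ne 1 [::])). Qed.
Lemma notzero_A p : 1 < p -> ~ isZero (IdA p).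
Proof. move=> Hp Z. have := IdA_size (Z [:: 0] [:: 0; 0] (conj (@cons_ne 0 [::]) (@cons_ne 0 [:: 0]))).
  move=> /= E. apply: (mod_nontriv (a := 1) (k := 1) (q := p)) => //. Qed.

Lemma MinN Y (H : is_eqtheory Y) : ~ incl Y IdZM ->
  exists n, 0 < n /\ Y (X 1) (X n.+1) /\ minimal Y n.
Proof.
move=> nZ. have [d [Hd Hd1]] := Zlem H nZ.
exact: (exmin (ex_intro (fun d => 0 < d /\ Y (X 1) (X d.+1)) d (conj Hd Hd1))).
Qed.

Lemma notZM_A Y p : 0 < p -> incl (IdA p) Y -> ~ incl Y IdZM.
Proof. move=> Hp HA HZ. have [_ [_ [E|[E1 E2]]]] := HZ _ _ (HA _ _ (IdA_X1 p)).
  by move: (congr1 size E); rewrite !size_nseq; lia. by move: E1; rewrite size_nseq. Qed.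

Lemma notSL_A Y p : 0 < p -> incl (IdA p) Y -> ~ incl Y IdSL.
Proof. move=> Hp HA HS. have [_ [_ E]] := HS _ _ (HA _ _ (IdA_xyn p)).
  have := E (pred1 1). rewrite /= has_nseq. by case: (p) Hp. Qed.

Lemma atom_A p : prime p -> isAtom (IdA p).
Proof.
move=> pp. have p1 := prime_gt1 pp. split; first exact: notzero_A.
move=> Y HY le1.
have nZ : ~ incl Y IdZM by apply: (notZM_A (p := p)) => //; lia.
have [n [Hn [H1 Hmin]]] := MinN HY nZ.
have YA := Mlem HY Hn H1 Hmin.
have np : n %| p.
  have := IdA_size (YA _ _ (le1 _ _ (IdA_X1 p))). rewrite /= !size_nseq => E.
  have := E. move/eqP; rewrite eq_sym eqn_mod_dvd // subSS subn0. done.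
case: (eqVneq n 1) => [n1|n1].
  left. subst n.
  have Hg := GenA HY H1 (m := p) ltac:(lia) (le1 _ _ (IdA_xyn p)).
  apply: incl_tr (GenCore HY Hg). move=> u v [Hu Hv]; split => //; split => // f.
  by rewrite !modn1.
right. have := prime_nt_dvdP pp n1. move/(_ np) => E; subst n.
exact: incl_same YA le1.
Qed.

Lemma atom_SL : isAtom IdSL.
Proof.
split; first exact: notzero_SL.
move=> Y HY le1. case: (classic (incl Y IdSL)) => [HS|nS]; first by right; apply: incl_same.
left. have [a [b [c [Hb [Hc Y1]]]]] := SLpair HY nS.
have Y2 := ctxr HY [:: 0] Y1. rewrite -catA in Y2.
have E1 : Y (nseq a 0 ++ nseq b 1 ++ [:: 0]) [:: 0; 1].
  apply: le1; split; [by case: (a); case: (b)|split => // P].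
  rewrite !has_cat !has_nseq /= Hb. by case: (P 0); case: (P 1); rewrite ?andbF ?andbT ?orbT ?orbF.
have E2 : Y (X c ++ [:: 0]) [:: 0].
  apply: le1; split; [by case: (c)|split => // P].
  by rewrite has_cat has_nseq Hc /= orbF orbb.
have Y3 : Y [:: 0; 1] [:: 0].
  apply: (Ytr HY (Ysym HY E1)). by apply: (Ytr HY Y2).
have Y4 : Y [:: 1; 0] [:: 1].
  by have := Ysub HY Y3 (s := fun k => if k == 0 then [:: 1] else [:: 0]); apply => k; case: (k == 0).
apply: (Ytriv HY (a := 0) (b := 1)) => //.
apply: (Ytr HY (Ysym HY Y3)). apply: (Ytr HY (eqt_comm HY)). exact: Y4.
Qed.

Lemma atom_ZM : isAtom IdZM.
Proof.
split; first exact: notzero_ZM.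
move=> Y HY le1. case: (classic (incl Y IdZM)) => [HS|nS]; first by right; apply: incl_same.
left. have [d [Hd H1]] := Zlem HY nS.
have Y2 : Y (X d.+1) [:: 1; 1] by apply: le1; split => //; split => //; right; rewrite size_nseq.
have Y3 := Ytr HY H1 Y2.
have Y4 : Y [:: 2] [:: 1; 1].
  by have := Ysub HY Y3 (s := fun k => if k == 0 then [:: 2] else [:: 1]); apply => k; case: (k == 0).
apply: (Ytriv HY (a := 0) (b := 2)) => //. exact: (Ytr HY Y3 (Ysym HY Y4)).
Qed.

Lemma AC A : is_eqtheory A -> isAtom A ->
  same_theory A IdZM \/ same_theory A IdSL \/ exists p, prime p /\ same_theory A (IdA p).
Proof.
move=> HA [nZ At].
case: (classic (incl A IdZM)) => [HZ|nZM].
  left. case: (At _ IdZM_eq HZ) => [/notzero_ZM //|E]. exact: same_sym.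
have [n [Hn [H1 Hmin]]] := MinN HA nZM.
case: (eqVneq n 1) => [n1|n1].
  subst n. right; left. have HS := GenSL HA H1.
  case: (proj2 atom_SL A HA HS) => // E.
have n2 : 1 < n by lia.
right; right. exists (pdiv n); split; first exact: pdiv_prime.
have le1 : incl A (IdA (pdiv n)) := incl_tr (Mlem HA Hn H1 Hmin) (IdA_incl (pdiv_dvd n)).
case: (At _ (IdA_eq _) le1) => [/notzero_A|E]; last exact: same_sym.
by move/(_ (prime_gt1 (pdiv_prime n2))).
Qed.

Lemma SL_ne_ZM : ~ same_theory IdZM IdSL.
Proof.
move=> E. have : IdZM [:: 0; 0] [:: 0; 1] by split => //; split => //; right.
move/E => [_ [_ /(_ (pred1 1))]]. by [].
Qed.
Lemma SL_ne_A p : 0 < p -> ~ same_theory (IdA p) IdSL.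
Proof. move=> Hp E. apply: (notSL_A (Y := IdA p) Hp) => //. exact: same_incl. Qed.
Lemma ZM_ne_A p : 0 < p -> ~ same_theory (IdA p) IdZM.
Proof. move=> Hp E. apply: (notZM_A (Y := IdA p) Hp) => //. exact: same_incl. Qed.

Lemma A_div m n : 0 < n -> incl (IdA n) (IdA m) -> m %| n.
Proof.
move=> Hn HI. have := IdA_size (HI _ _ (IdA_X1 n)). rewrite /= !size_nseq => E.
move/eqP: E; rewrite eq_sym eqn_mod_dvd // subSS subn0. done.
Qed.

Lemma onlySL Y : is_eqtheory Y -> onlyAtom Y IdSL -> le Y IdSL.
Proof.
move=> HY O.
case: (classic (incl Y IdZM)) => [HZ|nZM].
  by case: SL_ne_ZM; apply: O => //; [exact: IdZM_eq|exact: atom_ZM].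
have [n [Hn [H1 Hmin]]] := MinN HY nZM.
case: (eqVneq n 1) => [n1|n1]; first by subst n; apply: GenSL.
have n2 : 1 < n by lia.
have pp := pdiv_prime n2.
have le1 : incl Y (IdA (pdiv n)) := incl_tr (Mlem HY Hn H1 Hmin) (IdA_incl (pdiv_dvd n)).
case: (SL_ne_A (p := pdiv n)); first by have := prime_gt1 pp; lia.
by apply: O => //; [exact: IdA_eq|exact: atom_A].
Qed.

Lemma prime_power p n : prime p -> 0 < n -> (forall q, prime q -> q %| n -> q = p) ->
  n = p ^ logn p n.
Proof.
move=> pp Hn Hq. have : p.-nat n.
  apply/pnatP => // q qp qn. by rewrite (Hq q qp qn) inE.
by move/part_pnat_id; rewrite p_part.
Qed.

Lemma onlyA Y p : prime p -> is_eqtheory Y -> onlyAtom Y (IdA p) ->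
  exists i, same_theory Y (IdA (p ^ i)).
Proof.
move=> pp HY O. have p1 := prime_gt1 pp.
case: (classic (incl Y IdZM)) => [HZ|nZM].
  case: (ZM_ne_A (p := p)); first by lia.
  apply: same_sym. by apply: O => //; [exact: IdZM_eq|exact: atom_ZM].
case: (classic (incl Y IdSL)) => [HS|nSL].
  case: (SL_ne_A (p := p)); first by lia.
  apply: same_sym. by apply: O => //; [exact: IdSL_eq|exact: atom_SL].
have [n [Hn E]] := Klem HY nZM nSL.
exists (logn p n). rewrite -prime_power //.
move=> q qp qn.
have le1 : incl Y (IdA q) := incl_tr (same_incl E) (IdA_incl qn).
have E2 := O _ (IdA_eq q) (atom_A qp) le1.
have : p %| q by apply: A_div; [exact: prime_gt0|exact: same_incl E2].
by rewrite dvdn_prime2 // => /eqP.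
Qed.

Lemma Z2_notSL : ~ incl Z2 IdSL.
Proof. move=> H. have : Z2 [:: 0; 1; 2] [:: 0; 1; 3] by split => //; split => //; right.
  by move/H => [_ [_ /(_ (pred1 2))]]. Qed.
Lemma Z2_notA q : 1 < q -> ~ incl Z2 (IdA q).
Proof. move=> Hq H. have : Z2 [:: 0; 0; 0] [:: 0; 0; 0; 0] by split => //; split => //; right.
  move/H/IdA_size => /= E. apply: (mod_nontriv (a := 3) (k := 1) (q := q)) => //; lia. Qed.
Lemma Z1_notSL : ~ incl Z1 IdSL.
Proof. move=> H. have : Z1 [:: 0; 0] [:: 1; 1; 1; 1] by split => //; split => //; right.
  by move/H => [_ [_ /(_ (pred1 1))]]. Qed.
Lemma Z1_notA q : 1 < q -> ~ incl Z1 (IdA q).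
Proof. move=> Hq H. have : Z1 [:: 0; 0] [:: 0; 0; 0] by split => //; split => //; right.
  move/H/IdA_size => /= E. apply: (mod_nontriv (a := 2) (k := 1) (q := q)) => //; lia. Qed.

Lemma onlyZM_of Y : is_eqtheory Y -> ~ incl Y IdSL -> (forall q, 1 < q -> ~ incl Y (IdA q)) ->
  onlyAtom Y IdZM.
Proof.
move=> HY nS nA B HB AB le1.
case: (AC HB AB) => [//|[E|[q [qp E]]]].
  case: nS. apply: incl_tr le1 (same_incl E).
case: (nA q (prime_gt1 qp)). apply: incl_tr le1 (same_incl E).
Qed.

Lemma isSL_iff A : is_eqtheory A -> (isSL A <-> same_theory A IdSL).
Proof.
move=> HA; split.
  move=> [At Pr]. case: (AC HA At) => [E|[//|[p [pp E]]]].
  - exfalso. have O : onlyAtom Z2 A.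
      apply: onlyAtom_same (same_sym E) _. apply: onlyZM_of; [exact: Z2_eq|exact: Z2_notSL|exact: Z2_notA].
    have := Pr _ Z2_eq O. move=> HI.
    have : A [:: 0; 1] [:: 2; 3] by apply/E; split => //; split => //; right.
    by move/HI => [_ [_ [|[]]]].
  - exfalso. have p1 := prime_gt1 pp.
    have O : onlyAtom (IdA (p ^ 2)) A.
      apply: onlyAtom_same (same_sym E) _.
      move=> B HB AB le1. case: (AC HB AB) => [E2|[E2|[q [qp E2]]]].
      + case: (notZM_A (Y := IdA (p ^ 2)) (p := p ^ 2)); first by rewrite expn_gt0; lia.
          by [].
        exact: incl_tr le1 (same_incl E2).
      + case: (notSL_A (Y := IdA (p ^ 2)) (p := p ^ 2)); first by rewrite expn_gt0; lia.
          by [].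
        exact: incl_tr le1 (same_incl E2).
      + have : q %| p ^ 2 by apply: A_div; [rewrite expn_gt0; lia|exact: incl_tr le1 (same_incl E2)].
        rewrite Euclid_dvdX // andbT dvdn_prime2 // => /eqP qp'. by subst q.
    have := Pr _ (IdA_eq _) O => HI.
    have := A_div (m := p ^ 2) (n := p) ltac:(lia) (incl_tr (same_incl (same_sym E)) HI).
    move/(dvdn_leq _). have : p < p ^ 2 by rewrite -{1}(expn1 p) ltn_exp2l. lia.
move=> E. split.
  apply: isAtom_same (same_sym E) atom_SL.
move=> Y HY O. apply: incl_tr (same_incl E) _. apply: onlySL => //.
exact: onlyAtom_same E O.
Qed.

Lemma isZMp_iff A : is_eqtheory A -> (isZMp A <-> same_theory A IdZM).
Proof.
move=> HA; split.
  move=> [At [Y [Z [HY [HZ [OY [OZ [n1 n2]]]]]]]].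
  case: (AC HA At) => [//|[E|[p [pp E]]]]; exfalso.
  - have OY' := onlyAtom_same E OY. have OZ' := onlyAtom_same E OZ.
    case: (proj2 atom_SL Y HY (onlySL HY OY')) => [ZY|EY].
      apply: n1. apply: incl_tr ZY. exact: sub_TRIV.
    case: (proj2 atom_SL Z HZ (onlySL HZ OZ')) => [ZZ|EZ].
      apply: n2. apply: incl_tr ZZ. exact: sub_TRIV.
    apply: n1. exact: incl_tr (same_incl EZ) (same_incl (same_sym EY)).
  - have [i Ei] := onlyA pp HY (onlyAtom_same E OY).
    have [j Ej] := onlyA pp HZ (onlyAtom_same E OZ).
    case: (leqP i j) => ij.
      apply: n1. apply: incl_tr (same_incl Ej) _. apply: incl_tr _ (same_incl (same_sym Ei)).
      exact: IdA_incl (dvdn_exp2l _ ij).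
    apply: n2. apply: incl_tr (same_incl Ei) _. apply: incl_tr _ (same_incl (same_sym Ej)).
    apply: IdA_incl (dvdn_exp2l _ _). lia.
move=> E. split; first exact: isAtom_same (same_sym E) atom_ZM.
exists Z1, Z2; split; first exact: Z1_eq. split; first exact: Z2_eq.
split. apply: onlyAtom_same (same_sym E) _. apply: onlyZM_of; [exact: Z1_eq|exact: Z1_notSL|exact: Z1_notA].
split. apply: onlyAtom_same (same_sym E) _. apply: onlyZM_of; [exact: Z2_eq|exact: Z2_notSL|exact: Z2_notA].
split.
  move=> HI. have : Z2 [:: 0; 1; 2] [:: 0; 1; 3] by split => //; split => //; right.
  by move/HI => [_ [_ [|[]]]].
move=> HI. have : Z1 [:: 0; 0] [:: 1; 1; 1; 1] by split => //; split => //; right.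
by move/HI => [_ [_ [|[]]]].
Qed.

Lemma SLcond A : (exists S, is_eqtheory S /\ isSL S /\ le S A) <-> incl A IdSL.
Proof.
split.
  move=> [S [HS [iS le1]]]. apply: incl_tr le1 (same_incl (proj1 (isSL_iff HS) iS)).
move=> H. exists IdSL; split; first exact: IdSL_eq. split => //.
by apply/(isSL_iff IdSL_eq) => u v.
Qed.

Lemma ZMcond A : (exists S, is_eqtheory S /\ isZMp S /\ le S A) <-> incl A IdZM.
Proof.
split.
  move=> [S [HS [iS le1]]]. apply: incl_tr le1 (same_incl (proj1 (isZMp_iff HS) iS)).
move=> H. exists IdZM; split; first exact: IdZM_eq. split => //.
by apply/(isZMp_iff IdZM_eq) => u v.
Qed.

Lemma grp_iff A : is_eqtheory A ->
  (~ incl A IdSL /\ ~ incl A IdZM <-> exists n, 0 < n /\ same_theory A (IdA n)).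
Proof.
move=> HA; split.
  move=> [nS nZ]. exact: Klem.
move=> [n [Hn E]]; split.
  move=> HS. apply: (notSL_A (Y := A) Hn) => //. exact: same_incl (same_sym E).
move=> HZ. apply: (notZM_A (Y := A) Hn) => //. exact: same_incl (same_sym E).
Qed.

Section Sem.
Implicit Types S : semigroup.

Lemma eval_from_cat S (a : nat -> S) acc w1 w2 :
  eval_from a acc (w1 ++ w2) = eval_from a (eval_from a acc w1) w2.
Proof. by elim: w1 acc => //= n w IH acc. Qed.

Lemma eval_from_op S (a : nat -> S) c b w :
  eval_from a (sg_op c b) w = sg_op c (eval_from a b w).
Proof. elim: w b => //= n w IH b. by rewrite -sg_assoc IH. Qed.

Lemma eval_cons S (a : nat -> S) n w : w <> [::] ->
  eval_word a (n :: w) = sg_op (a n) (eval_word a w).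
Proof. case: w => //= m w _. by rewrite eval_from_op. Qed.

Lemma eval_cat S (a : nat -> S) u w : u <> [::] -> w <> [::] ->
  eval_word a (u ++ w) = sg_op (eval_word a u) (eval_word a w).
Proof.
case: u => // n u _; case: w => // m w _ /=.
by rewrite eval_from_cat /= eval_from_op.
Qed.

Lemma eval_subst S (a : nat -> S) s u : (forall n, s n <> [::]) -> u <> [::] ->
  eval_word a (subst s u) = eval_word (fun i => eval_word a (s i)) u.
Proof.
move=> Hs. elim: u => // n u IH _. case: u IH => [|m u] IH.
  by rewrite subst_cons /subst /= cats0.
rewrite subst_cons eval_cat //; last exact: subst_ne.
by rewrite IH // [RHS]eval_cons.
Qed.

Definition IdS S : theory := fun u v =>
  u <> [::] /\ v <> [::] /\ forall a : nat -> S, eval_word a u = eval_word a v.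

Definition commS S := forall x y : S, sg_op x y = sg_op y x.

Lemma IdS_eq S : commS S -> is_eqtheory (IdS S).
Proof.
move=> C; split.
- by move=> u v [Hu [Hv _]].
- by move=> u Hu; split => //; split.
- by move=> u v [Hu [Hv H]]; split => //; split => // a; rewrite H.
- by move=> u v w [Hu [Hv H1]] [_ [Hw H2]]; split => //; split => // a; rewrite H1 H2.
- move=> u v w [Hu [Hv H1]] Hw; split; [exact: cat_ne|split; [exact: cat_ne|]].
  by move=> a; rewrite !eval_cat // H1.
- move=> u v w [Hu [Hv H1]] Hw; split; [exact: cat_ne'|split; [exact: cat_ne'|]].
  by move=> a; rewrite !eval_cat // H1.
- move=> u v s [Hu [Hv H1]] Hs; split; [exact: subst_ne|split; [exact: subst_ne|]].
  by move=> a; rewrite !eval_subst.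
- by split => //; split => // a /=; apply: C.
Qed.

Lemma comm_of T S : is_eqtheory T -> in_variety T S -> commS S.
Proof. move=> HT HV x y. have := HV _ _ (eqt_comm HT) (fun i => if i == 0 then x else y). by []. Qed.

Lemma invar_iff T S : is_eqtheory T -> (in_variety T S <-> incl T (IdS S)).
Proof.
move=> HT; split.
  move=> HV u v Huv. have [Hu Hv] := Yne HT Huv. split => //; split => //. exact: HV.
by move=> HI u v /HI [_ [_ H]].
Qed.

Lemma eval_from_nseq S (a : nat -> S) acc k i :
  eval_from a acc (nseq k i) = iter k (fun t => sg_op t (a i)) acc.
Proof. elim: k acc => //= k IH acc. rewrite IH. by elim: k {IH} => //= k ->. Qed.

Lemma spow_iter S (x : S) k : spow x k.+1 = iter k (fun t => sg_op t x) x.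
Proof. elim: k => // k IH. have -> : spow x k.+2 = sg_op (spow x k.+1) x by []. by rewrite IH. Qed.

Lemma eval_pow S (a : nat -> S) k i : eval_word a (nseq k.+1 i) = spow (a i) k.+1.
Proof. rewrite spow_iter. exact: eval_from_nseq. Qed.

Lemma spowS S (x : S) k : 0 < k -> spow x k.+1 = sg_op (spow x k) x.
Proof. by case: k. Qed.

Lemma spowD S (x : S) a b : 0 < a -> 0 < b -> spow x (a + b) = sg_op (spow x a) (spow x b).
Proof.
move=> Ha; elim: b => // b IH _. case: b IH => [|b] IH.
  by rewrite addn1 spowS.
rewrite addnS spowS; last lia. rewrite IH // (spowS x (k:=b.+1)) // sg_assoc. done.
Qed.

Lemma spow1 S (x : S) : spow x 1 = x. Proof. by []. Qed.

Lemma spowM S (x : S) a b : 0 < a -> 0 < b -> spow (spow x a) b = spow x (a * b).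
Proof.
move=> Ha; elim: b => // b IH _. case: b IH => [|b] IH; first by rewrite muln1.
rewrite spowS // IH // (mulnS a b.+1) addnC spowD //. rewrite muln_gt0; lia.
Qed.

Lemma spow_op S (x y : S) k : commS S -> 0 < k -> spow (sg_op x y) k = sg_op (spow x k) (spow y k).
Proof.
move=> C; elim: k => // k IH _. case: k IH => [|k] IH; first by [].
rewrite (spowS (sg_op x y) (k:=k.+1)) // IH // (spowS x (k:=k.+1)) // (spowS y (k:=k.+1)) //.
rewrite -!sg_assoc; congr sg_op. by rewrite sg_assoc (C _ x) -sg_assoc.
Qed.

End Sem.

Definition SLs : semigroup := @Defs.Semigroup bool andb true (fun x y z => andbA x y z).

Lemma SLs_eval (a : nat -> SLs) acc w : eval_from a acc w = acc && all a w.
Proof. elim: w acc => [|n w IH] acc /=; first by rewrite andbT. by rewrite IH andbA. Qed.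

Lemma SLs_sat : incl IdSL (IdS SLs).
Proof.
move=> u v [Hu [Hv HP]]; split => //; split => // a.
case: u Hu HP => // n u _; case: v Hv => // m v _ HP.
rewrite /= !SLs_eval. have := HP (predC a). rewrite !has_predC /=.
by case: (a n); case: (a m); case: (all a u); case: (all a v).
Qed.

Lemma SLs_notgroup : ~ is_group SLs.
Proof. move=> [e [He Hinv]]. have [y [E1 _]] := Hinv false. have := He true.
  move=> [/= E2 _]. rewrite /= in E1. by rewrite -E1 in E2. Qed.

Lemma SLs_notnil : ~ is_nil_semigroup SLs.
Proof.
move=> [z [Hz Hp]]. have [/= E1 _] := Hz false. have [n [Hn E2]] := Hp true.
have : spow (true : SLs) n = true by elim: n {Hn E2} => // [[|k]] //= ->.
rewrite E2 => Ez. by move: E1; rewrite Ez.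
Qed.

Definition ZMs : semigroup := @Defs.Semigroup bool (fun _ _ => false) true (fun _ _ _ => erefl).

Lemma ZMs_eval (a : nat -> ZMs) acc w : eval_from a acc w = if w is [::] then acc else false.
Proof. elim: w acc => // n w IH acc /=. rewrite IH. by case: w {IH}. Qed.

Lemma ZMs_sat : incl IdZM (IdS ZMs).
Proof.
move=> u v [Hu [Hv H]]; split => //; split => // a.
case: H => [->//|[Su Sv]].
case: u Hu Su => [|n [|n' u]] //= _ _; case: v Hv Sv => [|m [|m' v]] //= _ _.
by rewrite !ZMs_eval; case: (u); case: (v).
Qed.

Lemma ZMs_notgroup : ~ is_group ZMs.
Proof. move=> [e [He _]]. by have [/= E _] := He true. Qed.

Module Zmod.
From mathcomp Require Import all_algebra.
Import GRing.Theory.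


Definition Zsg (n : nat) : semigroup :=
  @Defs.Semigroup 'Z_n (fun x y => (x + y)%R) 0%R (fun x y z => addrA x y z).

Lemma Zsg_spow n (x : Zsg n) k : spow x k.+1 = (x *+ k.+1)%R.
Proof. elim: k => // k IH. rewrite spowS // IH /=. by rewrite [RHS]mulrSr. Qed.

Lemma Zsg_abel n : 1 < n -> is_abelian_group_exp (Zsg n) n.
Proof.
move=> Hn. split; first by move=> x y; apply: addrC.
exists 0%R; split; first by move=> x; split; [apply: add0r|apply: addr0].
split; first by move=> x; exists (- x)%R; split; [apply: subrr|apply: addNr].
move=> x. case: n Hn x => // n Hn x. rewrite Zsg_spow -mulr_natr.
by rewrite (pchar_Zp Hn) mulr0.
Qed.

Lemma Zsg_nontriv n : 1 < n -> ~ is_trivial (Zsg n).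
Proof. move=> Hn T. have := T 0%R 1%R. move/eqP. by rewrite eq_sym oner_eq0. Qed.

Lemma Zsg_notnil n : 1 < n -> ~ is_nil_semigroup (Zsg n).
Proof.
move=> Hn [z [Hz _]]. have [/= E _] := Hz 1%R.
have : (z + 1 = z + 0)%R by rewrite E addr0.
move/addrI/eqP. by rewrite oner_eq0.
Qed.

End Zmod.
Import Zmod.

Lemma abel_group S n : is_abelian_group_exp S n -> is_group S.
Proof. by move=> [_ [e [He [Hi _]]]]; exists e. Qed.

Lemma AbelSat S n : is_abelian_group_exp S n -> incl (IdA n) (IdS S).
Proof.
move=> HS. have C : commS S by case: HS.
apply: (GenCore (IdS_eq C)). split => //; split => // a.
case: n HS => [|n] [_ [e [He [_ Hp]]]] //.
rewrite eval_cons // eval_pow Hp. by case: (He (a 0)).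
Qed.

Lemma SemA T : is_eqtheory T ->
  (abelian_periodic_group_variety T <-> exists n, 0 < n /\ same_theory T (IdA n)).
Proof.
move=> HT; split.
  move=> [n [Hn HS]]. apply: Klem => //.
  - move=> HZ. have : in_variety T ZMs.
      apply/(invar_iff _ HT). exact: incl_tr HZ ZMs_sat.
    move/HS/abel_group. exact: ZMs_notgroup.
  - move=> HZ. have : in_variety T SLs.
      apply/(invar_iff _ HT). exact: incl_tr HZ SLs_sat.
    move/HS/abel_group. exact: SLs_notgroup.
move=> [n [Hn E]]. exists n; split => // S; split.
  move=> HV. have C := comm_of HT HV.
  have P2 : forall x y : S, sg_op x (spow y n) = x.
    move=> x y. have := HV _ _ (proj2 (E _ _) (IdA_xyn n)) (fun i => if i == 0 then x else y).
    case: n Hn E => // n _ _. by rewrite eval_cons // eval_pow.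
  split => //. exists (spow (sg_pt S) n).
  have He : forall x : S, sg_op (spow (sg_pt S) n) x = x /\ sg_op x (spow (sg_pt S) n) = x.
    by move=> x; rewrite C P2.
  have Hx : forall x : S, spow x n = spow (sg_pt S) n.
    by move=> x; rewrite -(P2 (spow x n) (sg_pt S)) C P2.
  split => //; split => // x.
  case: (eqVneq n 1) => [n1|n1].
    exists x. subst n. have := P2 x x. rewrite spow1 => ->. by rewrite -(Hx x) spow1.
  exists (spow x n.-1). have -> : sg_op (spow x n.-1) x = spow x n.
    by rewrite -spowS; [congr spow; lia|lia].
  by rewrite C -spowS ?Hx; [|lia]; have -> : n.-1.+1 = n by lia.
move=> HS. apply/(invar_iff _ HT). apply: incl_tr (same_incl E) (AbelSat HS).
Qed.

Definition Gcond (T : theory) := forall G, is_eqtheory G -> incl T G -> ~ incl G IdSL ->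
  ~ incl G IdZM -> isZero G.

Lemma Gcond_nontriv T n : is_eqtheory T -> Gcond T -> 1 < n -> ~ incl T (IdA n).
Proof.
move=> HT HG Hn HI. have := HG _ (IdA_eq n) HI.
have Hn0 : 0 < n by lia.
move/(_ (notSL_A (Y := IdA n) Hn0 (fun u v H => H)) (notZM_A (Y := IdA n) Hn0 (fun u v H => H))).
exact: notzero_A.
Qed.

Lemma Zsg_in T n : is_eqtheory T -> 1 < n -> incl T (IdA n) -> in_variety T (Zsg n).
Proof. move=> HT Hn HI. apply/(invar_iff _ HT). exact: incl_tr HI (AbelSat (Zsg_abel Hn)). Qed.

Lemma Gcond_of T (P : semigroup -> Prop) : is_eqtheory T ->
  (forall n, 1 < n -> P (Zsg n) -> False) ->
  (forall S, in_variety T S -> P S) -> Gcond T.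
Proof.
move=> HT HZ HP G HGe TG nS nZ.
have [n [Hn E]] := Klem HGe nZ nS.
case: (eqVneq n 1) => [n1|n1].
  subst n. move=> u v [Hu Hv]. apply/E. split => //; split => // f. by rewrite !modn1.
exfalso. have n2 : 1 < n by lia.
apply: (HZ n n2). apply: HP. apply: (Zsg_in HT n2). exact: incl_tr TG (same_incl E).
Qed.

Lemma GroupLem T S : is_eqtheory T -> in_variety T S -> is_group S -> ~ is_trivial S ->
  exists o, 1 < o /\ incl T (IdA o).
Proof.
move=> HT HV [e [He Hinv]] nT.
have C := comm_of HT HV.
have [g ge] : exists g : S, g <> e.
  apply: NNPP => nx. apply: nT => x y.
  have Hx : x = e by apply: NNPP => nx'; apply: nx; exists x.
  have Hy : y = e by apply: NNPP => ny'; apply: nx; exists y.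
  by rewrite Hx Hy.
pose gp k := iter k (sg_op g) e.
have gpD : forall a b, gp (a + b) = sg_op (gp a) (gp b).
  elim=> [|a IH] b; first by rewrite add0n /gp /=; case: (He (iter b (sg_op g) e)).
  by rewrite addSn /gp /= -/(gp (a + b)) -/(gp a) IH sg_assoc.
have gp0 : gp 0 = e by [].
have evf : forall (f : nat -> nat) acc w,
    eval_from (fun i => gp (f i)) acc w = sg_op acc (gp (sumn (map f w))).
  move=> f acc w. elim: w acc => [|j w IH] acc /=; first by case: (He acc).
  by rewrite IH gpD sg_assoc.
have Tgp : forall u v, T u v -> forall f : nat -> nat, gp (sumn (map f u)) = gp (sumn (map f v)).
  move=> u v Huv f. have := HV _ _ Huv (fun i => gp (f i)).
  have [Hu Hv] := Yne HT Huv.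
  case: u Hu Huv => // j u _ _; case: v Hv => // k v _ /=.
  by rewrite !evf -!gpD.
have cancel : forall a b, a <= b -> gp a = gp b -> gp (b - a) = e.
  move=> a b ab E. have [h [_ Hh]] := Hinv (gp a).
  have Eb : gp b = sg_op (gp a) (gp (b - a)) by rewrite -gpD; congr gp; lia.
  have := congr1 (sg_op h) E. rewrite Eb sg_assoc Hh. by case: (He (gp (b - a))) => -> _.
have gp1 : gp 1 = g by rewrite /gp /=; case: (He g).
case: (classic (exists k, 0 < k /\ gp k = e)) => [exk|nexk].
  have [o [Ho [Eo Hmin]]] := exmin exk.
  have o1 : 1 < o.
    case: (eqVneq o 1) => [o1|]; last by lia.
    by subst o; rewrite gp1 in Eo.
  have gpq : forall q, gp (q * o) = e.
    elim=> [|q IH] //. by rewrite mulSn gpD Eo IH; case: (He e).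
  have gpm : forall a, gp a = gp (a %% o).
    move=> a. rewrite {1}(divn_eq a o) gpD gpq. by case: (He (gp (a %% o))).
  exists o; split => // u v Huv. have [Hu Hv] := Yne HT Huv.
  split => //; split => // f. have := Tgp u v Huv f. rewrite (gpm (sumn _)) (gpm (sumn (map f v))).
  set r1 := _ %% o; set r2 := _ %% o => E.
  have r1o : r1 < o by rewrite /r1 ltn_pmod //; lia.
  have r2o : r2 < o by rewrite /r2 ltn_pmod //; lia.
  case: (ltngtP r1 r2) => // r12; exfalso.
  - apply: (Hmin (r2 - r1)); first lia. apply: cancel => //; lia.
  - apply: (Hmin (r1 - r2)); first lia. apply: cancel => //; lia.
exists 2; split => // u v Huv. have [Hu Hv] := Yne HT Huv.
split => //; split => // f. have := Tgp u v Huv f.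
set a := sumn _; set b := sumn _ => E.
case: (ltngtP a b) => [ab|ab|->] //; exfalso; apply: nexk.
- exists (b - a); split; first lia. apply: cancel => //; lia.
- exists (a - b); split; first lia. apply: cancel => //; lia.
Qed.

Lemma SemB T : is_eqtheory T -> (combinatorial T <-> Gcond T).
Proof.
move=> HT; split.
  move=> Hc. apply: (Gcond_of (P := fun S => is_group S -> is_trivial S)) => //.
  move=> n Hn HP. apply: (Zsg_nontriv Hn). apply: HP. exact: abel_group (Zsg_abel Hn).
move=> HG S HV Hg. apply: NNPP => nT.
have [o [Ho HI]] := GroupLem HT HV Hg nT.
exact: (Gcond_nontriv HT HG Ho HI).
Qed.

Lemma subst_zeros s w : (forall k, all (pred1 0) (s k)) -> subst s w = X (size (subst s w)).
Proof.
move=> Hs. apply/all_pred1P. elim: w => //= k w IH. by rewrite subst_cons all_cat Hs IH.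
Qed.

Lemma size_subst_nseq s k j : size (subst s (nseq k j)) = k * size (s j).
Proof. elim: k => //= k IH. by rewrite subst_cons size_cat IH mulSn. Qed.

Lemma periodic_pair T : is_eqtheory T -> ~ incl T IdSL ->
  exists i m, 0 < i /\ 0 < m /\ T (X i) (X (i + m)).
Proof.
move=> HT nS. have [a [b [c [Hb [Hc Y1]]]]] := SLpair HT nS.
have gen : forall p q, 0 < p -> 0 < q -> p <> q -> T (X p) (X q) ->
    exists i m, 0 < i /\ 0 < m /\ T (X i) (X (i + m)).
  move=> p q Hp Hq pq Tpq. case: (ltngtP p q) => [lpq|lqp|epq] //.
  - exists p, (q - p); split => //; split; first lia. by have -> : p + (q - p) = q by lia.
  - exists q, (p - q); split => //; split; first lia. have -> : q + (p - q) = p by lia.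
    exact: (Ysym HT).
pose s1 := fun k : nat => [:: 0].
pose s2 := fun k : nat => if k == 0 then [:: 0] else [:: 0; 0].
have Hs1 : forall k, s1 k <> [::] by [].
have Hs2 : forall k, s2 k <> [::] by move=> k; rewrite /s2; case: (k == 0).
have Z1 : forall k, all (pred1 0) (s1 k) by [].
have Z2 : forall k, all (pred1 0) (s2 k) by move=> k; rewrite /s2; case: (k == 0).
have T1 := Ysub HT Y1 Hs1. have T2 := Ysub HT Y1 Hs2.
rewrite (subst_zeros _ Z1) (subst_zeros (X c) Z1) in T1.
rewrite (subst_zeros _ Z2) (subst_zeros (X c) Z2) in T2.
rewrite subst_cat size_cat !size_subst_nseq /s1 /= in T1.
rewrite subst_cat size_cat !size_subst_nseq /s2 /= in T2.
case: (eqVneq (a * 1 + b * 1) (c * 1)) => E.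
  apply: (gen (a * 1 + b * 2) (c * 1)); [lia|lia|move: E; lia|exact: T2].
apply: (gen (a * 1 + b * 1) (c * 1)); [lia|lia|by move/eqP; rewrite (negbTE E)|exact: T1].
Qed.

Definition Cpred (S : semigroup) m (s : S) := spow s m.+1 = s.

Lemma Cop_closed S m : commS S -> forall s t : S, Cpred m s -> Cpred m t -> Cpred m (sg_op s t).
Proof. move=> C s t Hs Ht. by rewrite /Cpred spow_op // Hs Ht. Qed.

Lemma sig_eq (A : Type) (P : A -> Prop) (x y : {s | P s}) : sval x = sval y -> x = y.
Proof. case: x y => x px [y py] /= E. subst y. f_equal. apply: proof_irrelevance. Qed.

Definition Cop S (m : nat) (C : commS S) (s t : {s : S | Cpred m s}) : {s : S | Cpred m s} :=
  exist _ (sg_op (sval s) (sval t)) (Cop_closed C (svalP s) (svalP t)).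

Lemma Cop_assoc S (m : nat) (C : commS S) (x y z : {s : S | Cpred m s}) : Cop C x (Cop C y z) = Cop C (Cop C x y) z.
Proof. apply: sig_eq => /=. exact: sg_assoc. Qed.

Definition Csg S (m : nat) (C : commS S) (z0 : {s : S | Cpred m s}) : semigroup :=
  @Defs.Semigroup {s : S | Cpred m s} (Cop C) z0 (@Cop_assoc S m C).

Lemma Csg_eval_from S (m : nat) (C : commS S) (z0 : {s : S | Cpred m s}) (a : nat -> Csg C z0) acc w :
  sval (eval_from a acc w) = eval_from (fun i => sval (a i)) (sval acc) w.
Proof. by elim: w acc => //= n w IH acc; rewrite IH. Qed.

Lemma Csg_eval S (m : nat) (C : commS S) (z0 : {s : S | Cpred m s}) (a : nat -> Csg C z0) u : u <> [::] ->
  sval (eval_word a u) = eval_word (fun i => sval (a i)) u.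
Proof. case: u => // n u _ /=. exact: Csg_eval_from. Qed.

Lemma SemC T : is_eqtheory T -> (nil_variety T <-> ~ incl T IdSL /\ Gcond T).
Proof.
move=> HT; split.
  move=> Hn; split.
    move=> HS. apply: SLs_notnil. apply: Hn. apply/(invar_iff _ HT). exact: incl_tr HS SLs_sat.
  apply: (Gcond_of (P := is_nil_semigroup)) => // n Hn2. exact: Zsg_notnil.
move=> [nS HG] S HV. have C := comm_of HT HV.
have [i [m [Hi [Hm Tim]]]] := periodic_pair HT nS.
have Hper1 : forall x : S, spow x i = spow x (i + m).
  move=> x. have := HV _ _ Tim (fun _ => x). case: i Hi {Tim} => // i _.
  by rewrite addSn !eval_pow.
have per1 : forall (x : S) j, i <= j -> spow x (j + m) = spow x j.
  move=> x j ij. case: (eqVneq j i) => [->|jne]; first by rewrite -Hper1.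
  have -> : j + m = (j - i) + (i + m) by lia.
  rewrite spowD; [|lia|lia]. rewrite -Hper1 -spowD; [|lia|lia]. congr spow; lia.
have per : forall (x : S) j t, i <= j -> spow x (j + t * m) = spow x j.
  move=> x j t ij. elim: t => [|t IH]; first by rewrite addn0.
  by rewrite mulSn addnCA addnC per1 ?IH //; lia.
have im : i <= i * m by rewrite leq_pmulr.
have Cx : forall x : S, Cpred m (spow x (i * m)).
  move=> x. rewrite /Cpred spowM; [|lia|lia].
  by rewrite mulnS per.
pose z0 := exist (Cpred m) (spow (sg_pt S) (i * m)) (Cx _).
pose Cs := Csg C z0.
have CV : in_variety T Cs.
  move=> u v Huv a. have [Hu Hv] := Yne HT Huv. apply: sig_eq.
  rewrite !Csg_eval //. exact: HV.
have CC : commS Cs by move=> x y; apply: sig_eq => /=; apply: C.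
have Ctriv : forall s t : Cs, s = t.
  have HZ : isZero (IdS Cs).
    apply: HG; [exact: IdS_eq|by apply/(invar_iff _ HT)|..].
      move=> HI. apply: nS. apply: incl_tr HI. by apply/(invar_iff _ HT).
    move=> HI.
    have : IdS Cs [:: 0] (X m.+1).
      split => //; split => // a. apply: sig_eq. rewrite !Csg_eval // eval_pow.
      exact: (esym (svalP (a 0))).
    move/HI => [_ [_ [E|[E1 E2]]]]; first by move/(congr1 size): E; rewrite /X size_nseq /= => E; lia.
    by [].
  move=> s t. have := HZ [:: 0] [:: 1] (conj (@cons_ne 0 [::]) (@cons_ne 1 [::])).
  move=> [_ [_ /(_ (fun k => if k == 0 then s else t))]]. by [].
have zx : forall x : S, spow x (i * m) = sval z0.
  move=> x. have := Ctriv (exist (Cpred m) _ (Cx x)) z0. by move/(congr1 sval).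
have zy : forall y : S, sg_op (sval z0) y = sval z0.
  move=> y. have Cy : Cpred m (sg_op (sval z0) y).
    rewrite /Cpred spow_op // (svalP z0) -(zx y) -spowD; [|lia|lia].
    have -> : i * m + m.+1 = (i * m).+1 + 1 * m by lia.
    rewrite per; last lia. rewrite spowS //; lia.
  have := Ctriv (exist (Cpred m) _ Cy) z0. by move/(congr1 sval).
exists (sval z0); split.
  by move=> x; split; [exact: zy|rewrite C zy].
move=> x. exists (i * m); split; [lia|exact: zx].
Qed.

Definition Le s t := FEq (LJoin (LVar s) (LVar t)) (LVar t).
Definition EqF s t := FEq (LVar s) (LVar t).
Definition ZeroF s k := FForall k (Le s k).
Definition AtomF a k := FAnd (FNot (ZeroF a k))
  (FForall k (FImp (Le k a) (FOr (ZeroF k k.+1) (EqF k a)))).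
Definition OnlyF y a k := FForall k (FImp (FAnd (AtomF k k.+1) (Le k y)) (EqF k a)).
Definition SLF a k := FAnd (AtomF a k) (FForall k (FImp (OnlyF k a k.+1) (Le k a))).
Definition ZMF a k := FAnd (AtomF a k) (FExists k (FExists k.+1
  (FAnd (OnlyF k a k.+2) (FAnd (OnlyF k.+1 a k.+2) (FAnd (FNot (Le k k.+1)) (FNot (Le k.+1 k))))))).
Definition GrpF x k := FAnd (FNot (FExists k (FAnd (SLF k k.+1) (Le k x))))
  (FNot (FExists k (FAnd (ZMF k k.+1) (Le k x)))).
Definition CombF x k := FForall k (FImp (FAnd (Le k x) (GrpF k k.+1)) (ZeroF k k.+1)).
Definition NilF x k := FAnd (FNot (FExists k (FAnd (SLF k k.+1) (Le k x)))) (CombF x k).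

Definition env_ok (e : env) := forall n, is_eqtheory (e n).

Lemma upd_eq e k T : upd e k T k = T. Proof. by rewrite /upd eqxx. Qed.
Lemma upd_ne e k T j : j != k -> upd e k T j = e j. Proof. by rewrite /upd => /negbTE ->. Qed.
Lemma upd_ok e k T : env_ok e -> is_eqtheory T -> env_ok (upd e k T).
Proof. move=> He HT n; rewrite /upd; case: (n == k) => //. Qed.

Lemma holds_Le e s t : holds e (Le s t) <-> le (e s) (e t).
Proof.
rewrite /= /same_theory /com_join /le /incl; split.
  by move=> H u v /H [].
by move=> H u v; split => [[]//|Huv]; split => //; apply: H.
Qed.
Lemma holds_Eq e s t : holds e (EqF s t) <-> same_theory (e s) (e t).
Proof. by []. Qed.

Lemma holds_Zero e s k : env_ok e -> s != k -> (holds e (ZeroF s k) <-> isZero (e s)).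
Proof.
move=> He sk; split.
  move=> H. have /holds_Le := H _ TRIV_eq. by rewrite /le upd_eq upd_ne.
move=> HZ T HT. apply/holds_Le. rewrite /le upd_eq upd_ne //.
move=> u v Huv. apply: HZ. exact: sub_TRIV Huv.
Qed.

Lemma holds_Atom e a k : env_ok e -> a < k -> (holds e (AtomF a k) <-> isAtom (e a)).
Proof.
move=> He ak. have ak' : a != k by rewrite neq_ltn ak.
have kk : k != k.+1 by rewrite neq_ltn ltnSn.
have inner : forall Y, is_eqtheory Y ->
    (holds (upd e k Y) (FImp (Le k a) (FOr (ZeroF k k.+1) (EqF k a))) <->
     (le Y (e a) -> isZero Y \/ same_theory Y (e a))).
  move=> Y HY. have He' := upd_ok k He HY.
  have E1 := holds_Le (upd e k Y) k a. rewrite upd_eq upd_ne // in E1.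
  have E2 := holds_Zero He' kk. rewrite upd_eq in E2.
  have E3 := holds_Eq (upd e k Y) k a. rewrite upd_eq upd_ne // in E3.
  change ((holds (upd e k Y) (Le k a) -> holds (upd e k Y) (ZeroF k k.+1) \/ holds (upd e k Y) (EqF k a)) <->
     (le Y (e a) -> isZero Y \/ same_theory Y (e a))).
  rewrite E1 E2 E3. by [].
change ((~ holds e (ZeroF a k) /\ forall Y, is_eqtheory Y ->
  holds (upd e k Y) (FImp (Le k a) (FOr (ZeroF k k.+1) (EqF k a)))) <-> isAtom (e a)).
rewrite holds_Zero //. split.
  move=> [nZ H]; split => // Y HY. by apply/(inner Y HY); apply: H.
move=> [nZ H]; split => // Y HY. apply/(inner Y HY). exact: H.
Qed.

Lemma holds_Only e y a k : env_ok e -> y < k -> a < k ->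
  (holds e (OnlyF y a k) <-> onlyAtom (e y) (e a)).
Proof.
move=> He yk ak. have yk' : y != k by rewrite neq_ltn yk.
have ak' : a != k by rewrite neq_ltn ak.
have inner : forall B, is_eqtheory B ->
   ((holds (upd e k B) (AtomF k k.+1) /\ holds (upd e k B) (Le k y) -> holds (upd e k B) (EqF k a)) <->
    (isAtom B -> le B (e y) -> same_theory B (e a))).
  move=> B HB. have He' := upd_ok k He HB.
  have E1 := holds_Atom He' (ltnSn k). rewrite upd_eq in E1.
  have E2 := holds_Le (upd e k B) k y. rewrite upd_eq upd_ne // in E2.
  have E3 := holds_Eq (upd e k B) k a. rewrite upd_eq upd_ne // in E3.
  rewrite E1 E2 E3. tauto.
change ((forall B, is_eqtheory B ->
   (holds (upd e k B) (AtomF k k.+1) /\ holds (upd e k B) (Le k y) -> holds (upd e k B) (EqF k a)))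
  <-> onlyAtom (e y) (e a)).
split.
  move=> H B HB. by apply/(inner B HB); apply: H.
move=> H B HB. apply/(inner B HB). exact: H.
Qed.

Lemma holds_SL e a k : env_ok e -> a < k -> (holds e (SLF a k) <-> isSL (e a)).
Proof.
move=> He ak. have ak' : a != k by rewrite neq_ltn ak.
have inner : forall Y, is_eqtheory Y ->
   ((holds (upd e k Y) (OnlyF k a k.+1) -> holds (upd e k Y) (Le k a)) <->
    (onlyAtom Y (e a) -> le Y (e a))).
  move=> Y HY. have He' := upd_ok k He HY.
  have E1 := holds_Only He' (ltnSn k) (ltn_trans ak (ltnSn k)). rewrite upd_eq upd_ne // in E1.
  have E2 := holds_Le (upd e k Y) k a. rewrite upd_eq upd_ne // in E2.
  rewrite E1 E2. tauto.
change ((holds e (AtomF a k) /\ forall Y, is_eqtheory Y ->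
   (holds (upd e k Y) (OnlyF k a k.+1) -> holds (upd e k Y) (Le k a))) <-> isSL (e a)).
rewrite holds_Atom //. split.
  move=> [At H]; split => // Y HY. by apply/(inner Y HY); apply: H.
move=> [At H]; split => // Y HY. apply/(inner Y HY). exact: H.
Qed.

Lemma holds_ZM e a k : env_ok e -> a < k -> (holds e (ZMF a k) <-> isZMp (e a)).
Proof.
move=> He ak. have ak' : a != k by rewrite neq_ltn ak.
have ak1 : a != k.+1 by rewrite neq_ltn ltnS ltnW.
have kk : k != k.+1 by rewrite neq_ltn ltnSn.
have kk' : k.+1 != k by rewrite eq_sym.
have inner : forall Y Z, is_eqtheory Y -> is_eqtheory Z ->
  let e2 := upd (upd e k Y) k.+1 Z in
   ((holds e2 (OnlyF k a k.+2) /\ (holds e2 (OnlyF k.+1 a k.+2) /\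
      (~ holds e2 (Le k k.+1) /\ ~ holds e2 (Le k.+1 k)))) <->
    (onlyAtom Y (e a) /\ onlyAtom Z (e a) /\ ~ le Y Z /\ ~ le Z Y)).
  move=> Y Z HY HZ e2. have He2 : env_ok e2 by apply: upd_ok => //; apply: upd_ok.
  have V1 : e2 k = Y by rewrite /e2 upd_ne // upd_eq.
  have V2 : e2 k.+1 = Z by rewrite /e2 upd_eq.
  have V3 : e2 a = e a by rewrite /e2 !upd_ne.
  have E1 := holds_Only He2 (ltn_trans (ltnSn k) (ltnSn k.+1)) (ltn_trans ak (ltn_trans (ltnSn k) (ltnSn k.+1))).
  rewrite V1 V3 in E1.
  have E2 := holds_Only He2 (ltnSn k.+1) (ltn_trans ak (ltn_trans (ltnSn k) (ltnSn k.+1))).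
  rewrite V2 V3 in E2.
  have E3 := holds_Le e2 k k.+1. rewrite V1 V2 in E3.
  have E4 := holds_Le e2 k.+1 k. rewrite V1 V2 in E4.
  rewrite E1 E2 E3 E4. tauto.
change ((holds e (AtomF a k) /\ exists Y, is_eqtheory Y /\ exists Z, is_eqtheory Z /\
  let e2 := upd (upd e k Y) k.+1 Z in
   (holds e2 (OnlyF k a k.+2) /\ (holds e2 (OnlyF k.+1 a k.+2) /\
      (~ holds e2 (Le k k.+1) /\ ~ holds e2 (Le k.+1 k))))) <-> isZMp (e a)).
rewrite holds_Atom //. split.
  move=> [At [Y [HY [Z [HZ H]]]]]; split => //. exists Y, Z.
  have := proj1 (inner Y Z HY HZ) H. tauto.
move=> [At [Y [Z [HY [HZ H]]]]]; split => //. exists Y; split => //; exists Z; split => //.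
exact: proj2 (inner Y Z HY HZ) H.
Qed.

Lemma holds_exSL e x k : env_ok e -> x < k ->
  (holds e (FExists k (FAnd (SLF k k.+1) (Le k x))) <-> incl (e x) IdSL).
Proof.
move=> He xk. have xk' : x != k by rewrite neq_ltn xk.
rewrite -SLcond.
have inner : forall S, is_eqtheory S ->
   (holds (upd e k S) (SLF k k.+1) /\ holds (upd e k S) (Le k x) <-> isSL S /\ le S (e x)).
  move=> S HS. have He' := upd_ok k He HS.
  have E1 := holds_SL He' (ltnSn k). rewrite upd_eq in E1.
  have E2 := holds_Le (upd e k S) k x. rewrite upd_eq upd_ne // in E2.
  by rewrite E1 E2.
change ((exists S, is_eqtheory S /\ (holds (upd e k S) (SLF k k.+1) /\ holds (upd e k S) (Le k x)))
  <-> (exists S, is_eqtheory S /\ isSL S /\ le S (e x))).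
split.
  move=> [S [HS H]]. exists S; split => //. exact: proj1 (inner S HS) H.
move=> [S [HS H]]. exists S; split => //. exact: proj2 (inner S HS) H.
Qed.

Lemma holds_exZM e x k : env_ok e -> x < k ->
  (holds e (FExists k (FAnd (ZMF k k.+1) (Le k x))) <-> incl (e x) IdZM).
Proof.
move=> He xk. have xk' : x != k by rewrite neq_ltn xk.
rewrite -ZMcond.
have inner : forall S, is_eqtheory S ->
   (holds (upd e k S) (ZMF k k.+1) /\ holds (upd e k S) (Le k x) <-> isZMp S /\ le S (e x)).
  move=> S HS. have He' := upd_ok k He HS.
  have E1 := holds_ZM He' (ltnSn k). rewrite upd_eq in E1.
  have E2 := holds_Le (upd e k S) k x. rewrite upd_eq upd_ne // in E2.
  by rewrite E1 E2.
change ((exists S, is_eqtheory S /\ (holds (upd e k S) (ZMF k k.+1) /\ holds (upd e k S) (Le k x)))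
  <-> (exists S, is_eqtheory S /\ isZMp S /\ le S (e x))).
split.
  move=> [S [HS H]]. exists S; split => //. exact: proj1 (inner S HS) H.
move=> [S [HS H]]. exists S; split => //. exact: proj2 (inner S HS) H.
Qed.

Lemma holds_Grp e x k : env_ok e -> x < k ->
  (holds e (GrpF x k) <-> ~ incl (e x) IdSL /\ ~ incl (e x) IdZM).
Proof.
move=> He xk.
change ((~ holds e (FExists k (FAnd (SLF k k.+1) (Le k x))) /\
         ~ holds e (FExists k (FAnd (ZMF k k.+1) (Le k x)))) <-> ~ incl (e x) IdSL /\ ~ incl (e x) IdZM).
by rewrite holds_exSL // holds_exZM.
Qed.

Lemma holds_Comb e x k : env_ok e -> x < k -> (holds e (CombF x k) <-> Gcond (e x)).
Proof.
move=> He xk. have xk' : x != k by rewrite neq_ltn xk.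
have kk : k != k.+1 by rewrite neq_ltn ltnSn.
have inner : forall G, is_eqtheory G ->
  ((holds (upd e k G) (Le k x) /\ holds (upd e k G) (GrpF k k.+1) -> holds (upd e k G) (ZeroF k k.+1))
   <-> (incl (e x) G -> ~ incl G IdSL -> ~ incl G IdZM -> isZero G)).
  move=> G HG. have He' := upd_ok k He HG.
  have E1 := holds_Le (upd e k G) k x. rewrite upd_eq upd_ne // in E1.
  have E2 := holds_Grp He' (ltnSn k). rewrite upd_eq in E2.
  have E3 := holds_Zero He' kk. rewrite upd_eq in E3.
  rewrite E1 E2 E3 /le. tauto.
change ((forall G, is_eqtheory G ->
  (holds (upd e k G) (Le k x) /\ holds (upd e k G) (GrpF k k.+1) -> holds (upd e k G) (ZeroF k k.+1)))
  <-> Gcond (e x)).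
split.
  move=> H G HG. by apply/(inner G HG); apply: H.
move=> H G HG. apply/(inner G HG). exact: H.
Qed.

Lemma holds_Nil e x k : env_ok e -> x < k ->
  (holds e (NilF x k) <-> ~ incl (e x) IdSL /\ Gcond (e x)).
Proof.
move=> He xk.
change ((~ holds e (FExists k (FAnd (SLF k k.+1) (Le k x))) /\ holds e (CombF x k)) <-> ~ incl (e x) IdSL /\ Gcond (e x)).
by rewrite holds_exSL // holds_Comb.
Qed.

Theorem mainTheorem9 :
  definable abelian_periodic_group_variety /\
  definable combinatorial /\
  definable nil_variety.
Proof.
split; [|split].
- exists (GrpF 0 1), 0 => e He. rewrite holds_Grp // grp_iff; last exact: He.
  by rewrite SemA.
- exists (CombF 0 1), 0 => e He. rewrite holds_Comb //. by rewrite SemB.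
- exists (NilF 0 1), 0 => e He. rewrite holds_Nil //. by rewrite SemC.
Qed.
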